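(* Let $g$ solve system (S3) with initial data $h_{ii}>0$, $h_{11}\le h_{22}\le h_{33}$, and suppose $h\in D_{L_0}$, i.e. the solution of the planar system (P) starting at $(h_{00}^{1/3}h_{22},h_{00}^{1/3}h_{33})$ converges to $P_0$ (the point where $a=b=c$). Then the solution of (S3) exists for all $t\ge 0$, $g_{00}$ does not converge to $0$ (it converges to a positive limit), and $g_{11},g_{22},g_{33}$ all converge to the same positive value.
   Context: Let $\det h = h_{00}h_{11}h_{22}h_{33}$, $\beta=\frac{1}{6(\det h)^2}$, $p(x,y,z) = x^4 - x^3(y+z) + x^2yz + x(-y^3+y^2z+yz^2-z^3) + y^4 - y^3z - yz^3 + z^4$, $q(x,y,z) = 5x^4 - 3x^3(y+z) + x^2yz + x(y^3-y^2z-yz^2+z^3) - 3y^4 + 3y^3z + 3yz^3 - 3z^4$, $r(x,y,z) = \tfrac12(p+3q)(x,y,z) = 8x^4-5x^3(y+z)+2x^2yz+x(y^3-y^2z-yz^2+z^3)-4y^4+4y^3z+4yz^3-4z^4$. System (S3): $\dot g_{00} = -\beta\,p(g_{11},g_{22},g_{33})\,g_{00}^3$, $\dot g_{11} = -\beta\,q(g_{11},g_{22},g_{33})\,g_{00}^2g_{11}$, $\dot g_{22} = -\beta\,q(g_{22},g_{33},g_{11})\,g_{00}^2g_{22}$, $\dot g_{33} = -\beta\,q(g_{33},g_{11},g_{22})\,g_{00}^2g_{33}$, $g_{ii}(0)=h_{ii}$ (Bach flow on $\mathbb{R}\times\mathbb{S}^3$ in a diagonalizing frame; $g_{00}g_{11}g_{22}g_{33}=\det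 h$ is preserved). Set $a=g_{00}^{1/3}g_{11}$, $b=g_{00}^{1/3}g_{22}$, $c=g_{00}^{1/3}g_{33}$, so $abc=\det h$. Under (S3), $(b,c)$ follows, up to a time reparametrization, the planar system (P): $\dot b=-\tfrac23 r(b,a,c)\,b$, $\dot c=-\tfrac23 r(c,a,b)\,c$ with $a=\det h/(bc)$, on the region $a\le b\le c$. $P_0$ is the point $b=c=(\det h)^{1/3}$; $D_{L_0}$ is the set of initial metrics whose (P)-trajectory converges to $P_0$. *)

(* Defs.v *)
From Stdlib Require Import Reals Lra.
Open Scope R_scope.

Definition detH (h0 h1 h2 h3 : R) : R := h0 * h1 * h2 * h3.
Definition beta (h0 h1 h2 h3 : R) : R := 1 / (6 * (detH h0 h1 h2 h3) ^ 2).

Definition pp (x y z : R) : R :=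
  x ^ 4 - x ^ 3 * (y + z) + x ^ 2 * y * z
  + x * (- y ^ 3 + y ^ 2 * z + y * z ^ 2 - z ^ 3)
  + y ^ 4 - y ^ 3 * z - y * z ^ 3 + z ^ 4.

Definition qq (x y z : R) : R :=
  5 * x ^ 4 - 3 * x ^ 3 * (y + z) + x ^ 2 * y * z
  + x * (y ^ 3 - y ^ 2 * z - y * z ^ 2 + z ^ 3)
  - 3 * y ^ 4 + 3 * y ^ 3 * z + 3 * y * z ^ 3 - 3 * z ^ 4.

Definition rr (x y z : R) : R := (1 / 2) * (pp x y z + 3 * qq x y z).

Definition conv_infty (f : R -> R) (l : R) : Prop :=
  forall eps, 0 < eps -> exists T, forall t, T <= t -> Rabs (f t - l) < eps.

Definition right_cont0 (f : R -> R) : Prop :=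
  forall eps, 0 < eps -> exists delta, 0 < delta /\
    forall t, 0 <= t < delta -> Rabs (f t - f 0) < eps.

Definition S3_global_solution (h0 h1 h2 h3 : R) (g0 g1 g2 g3 : R -> R) : Prop :=
  let be := beta h0 h1 h2 h3 in
  g0 0 = h0 /\ g1 0 = h1 /\ g2 0 = h2 /\ g3 0 = h3 /\
  right_cont0 g0 /\ right_cont0 g1 /\ right_cont0 g2 /\ right_cont0 g3 /\
  (forall t, 0 < t ->
     derivable_pt_lim g0 t (- be * pp (g1 t) (g2 t) (g3 t) * (g0 t) ^ 3) /\
     derivable_pt_lim g1 t (- be * qq (g1 t) (g2 t) (g3 t) * (g0 t) ^ 2 * g1 t) /\
     derivable_pt_lim g2 t (- be * qq (g2 t) (g3 t) (g1 t) * (g0 t) ^ 2 * g2 t) /\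
     derivable_pt_lim g3 t (- be * qq (g3 t) (g1 t) (g2 t) * (g0 t) ^ 2 * g3 t)).

(* (b,c) solves the planar system (P) on [0,+infinity), with a = D/(bc),
   D = det h, starting at (b0,c0); b,c stay positive so that a is defined. *)
Definition P_global_solution (D b0 c0 : R) (b c : R -> R) : Prop :=
  b 0 = b0 /\ c 0 = c0 /\ right_cont0 b /\ right_cont0 c /\
  (forall t, 0 <= t -> 0 < b t /\ 0 < c t) /\
  (forall t, 0 < t ->
     derivable_pt_lim b t
       (- (2 / 3) * rr (b t) (D / (b t * c t)) (c t) * b t) /\
     derivable_pt_lim c t
       (- (2 / 3) * rr (c t) (D / (b t * c t)) (b t) * c t)).

Definition in_DL0 (h0 h1 h2 h3 : R) : Prop :=
  let D := detH h0 h1 h2 h3 in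
  exists b c : R -> R,
    P_global_solution D (Rpower h0 (1/3) * h2) (Rpower h0 (1/3) * h3) b c /\
    conv_infty b (Rpower D (1/3)) /\ conv_infty c (Rpower D (1/3)).

(* Main.v *)
Require Import Defs.
From Stdlib Require Import Reals Lra Psatz ClassicalEpsilon Ranalysis5.
From Coquelicot Require Import Coquelicot.
Open Scope R_scope.

Definition ff0 (x0 x1 x2 x3 : R) := pp x1 x2 x3 * x0^3.
Definition ff1 (x0 x1 x2 x3 : R) := qq x1 x2 x3 * x0^2 * x1.
Definition ff2 (x0 x1 x2 x3 : R) := qq x2 x3 x1 * x0^2 * x2.
Definition ff3 (x0 x1 x2 x3 : R) := qq x3 x1 x2 * x0^2 * x3.
Definition hh00 (x0 x1 x2 x3 y0 y1 y2 y3 : R) : R :=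
  x3^4*y0^2 + (-1)*x2*x3^3*y0^2 + (-1)*x2^3*x3*y0^2 + x2^4*y0^2 + (-1)*x1*x3^3*y0^2 + x1*x2*x3^2*y0^2 + x1*x2^2*x3*y0^2 + (-1)*x1*x2^3*y0^2 + x1^2*x2*x3*y0^2 + (-1)*x1^3*x3*y0^2 + (-1)*x1^3*x2*y0^2 + x1^4*y0^2 + x0*x3^4*y0 + (-1)*x0*x2*x3^3*y0 + (-1)*x0*x2^3*x3*y0 + x0*x2^4*y0 + (-1)*x0*x1*x3^3*y0 + x0*x1*x2*x3^2*y0 + x0*x1*x2^2*x3*y0 + (-1)*x0*x1*x2^3*y0 + x0*x1^2*x2*x3*y0 + (-1)*x0*x1^3*x3*y0 + (-1)*x0*x1^3*x2*y0 + x0*x1^4*y0 + x0^2*x3^4 + (-1)*x0^2*x2*x3^3 + (-1)*x0^2*x2^3*x3 + x0^2*x2^4 + (-1)*x0^2*x1*x3^3 + x0^2*x1*x2*x3^2 + x0^2*x1*x2^2*x3 + (-1)*x0^2*x1*x2^3 + x0^2*x1^2*x2*x3 + (-1)*x0^2*x1^3*x3 + (-1)*x0^2*x1^3*x2 + x0^2*x1^4.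
Definition hh01 (x0 x1 x2 x3 y0 y1 y2 y3 : R) : R :=
  y0^3*y1^3 + (-1)*x3*y0^3*y1^2 + (-1)*x3^3*y0^3 + (-1)*x2*y0^3*y1^2 + x2*x3*y0^3*y1 + x2*x3^2*y0^3 + x2^2*x3*y0^3 + (-1)*x2^3*y0^3 + x1*y0^3*y1^2 + (-1)*x1*x3*y0^3*y1 + (-1)*x1*x2*y0^3*y1 + x1*x2*x3*y0^3 + x1^2*y0^3*y1 + (-1)*x1^2*x3*y0^3 + (-1)*x1^2*x2*y0^3 + x1^3*y0^3.
Definition hh02 (x0 x1 x2 x3 y0 y1 y2 y3 : R) : R :=
  y0^3*y2^3 + (-1)*y0^3*y1*y2^2 + (-1)*y0^3*y1^3 + (-1)*x3*y0^3*y2^2 + x3*y0^3*y1*y2 + x3*y0^3*y1^2 + x3^2*y0^3*y1 + (-1)*x3^3*y0^3 + x2*y0^3*y2^2 + (-1)*x2*y0^3*y1*y2 + (-1)*x2*x3*y0^3*y2 + x2*x3*y0^3*y1 + x2^2*y0^3*y2 + (-1)*x2^2*y0^3*y1 + (-1)*x2^2*x3*y0^3 + x2^3*y0^3.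
Definition hh03 (x0 x1 x2 x3 y0 y1 y2 y3 : R) : R :=
  y0^3*y3^3 + (-1)*y0^3*y2*y3^2 + (-1)*y0^3*y2^3 + (-1)*y0^3*y1*y3^2 + y0^3*y1*y2*y3 + y0^3*y1*y2^2 + y0^3*y1^2*y2 + (-1)*y0^3*y1^3 + x3*y0^3*y3^2 + (-1)*x3*y0^3*y2*y3 + (-1)*x3*y0^3*y1*y3 + x3*y0^3*y1*y2 + x3^2*y0^3*y3 + (-1)*x3^2*y0^3*y2 + (-1)*x3^2*y0^3*y1 + x3^3*y0^3.
Definition hh10 (x0 x1 x2 x3 y0 y1 y2 y3 : R) : R :=
  (-3)*x1*x3^4*y0 + (3)*x1*x2*x3^3*y0 + (3)*x1*x2^3*x3*y0 + (-3)*x1*x2^4*y0 + x1^2*x3^3*y0 + (-1)*x1^2*x2*x3^2*y0 + (-1)*x1^2*x2^2*x3*y0 + x1^2*x2^3*y0 + x1^3*x2*x3*y0 + (-3)*x1^4*x3*y0 + (-3)*x1^4*x2*y0 + (5)*x1^5*y0 + (-3)*x0*x1*x3^4 + (3)*x0*x1*x2*x3^3 + (3)*x0*x1*x2^3*x3 + (-3)*x0*x1*x2^4 + x0*x1^2*x3^3 + (-1)*x0*x1^2*x2*x3^2 + (-1)*x0*x1^2*x2^2*x3 + x0*x1^2*x2^3 + x0*x1^3*x2*x3 + (-3)*x0*x1^4*x3 + (-3)*x0*x1^4*x2 + (5)*x0*x1^5.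
Definition hh11 (x0 x1 x2 x3 y0 y1 y2 y3 : R) : R :=
  (5)*y0^2*y1^4 + (-3)*x3*y0^2*y1^3 + x3^3*y0^2*y1 + (-3)*x3^4*y0^2 + (-3)*x2*y0^2*y1^3 + x2*x3*y0^2*y1^2 + (-1)*x2*x3^2*y0^2*y1 + (3)*x2*x3^3*y0^2 + (-1)*x2^2*x3*y0^2*y1 + x2^3*y0^2*y1 + (3)*x2^3*x3*y0^2 + (-3)*x2^4*y0^2 + (5)*x1*y0^2*y1^3 + (-3)*x1*x3*y0^2*y1^2 + x1*x3^3*y0^2 + (-3)*x1*x2*y0^2*y1^2 + x1*x2*x3*y0^2*y1 + (-1)*x1*x2*x3^2*y0^2 + (-1)*x1*x2^2*x3*y0^2 + x1*x2^3*y0^2 + (5)*x1^2*y0^2*y1^2 + (-3)*x1^2*x3*y0^2*y1 + (-3)*x1^2*x2*y0^2*y1 + x1^2*x2*x3*y0^2 + (5)*x1^3*y0^2*y1 + (-3)*x1^3*x3*y0^2 + (-3)*x1^3*x2*y0^2 + (5)*x1^4*y0^2.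
Definition hh12 (x0 x1 x2 x3 y0 y1 y2 y3 : R) : R :=
  (-3)*y0^2*y1*y2^3 + y0^2*y1^2*y2^2 + (-3)*y0^2*y1^4 + (3)*x3*y0^2*y1*y2^2 + (-1)*x3*y0^2*y1^2*y2 + x3*y0^2*y1^3 + (-1)*x3^2*y0^2*y1^2 + (3)*x3^3*y0^2*y1 + (-3)*x2*y0^2*y1*y2^2 + x2*y0^2*y1^2*y2 + (3)*x2*x3*y0^2*y1*y2 + (-1)*x2*x3*y0^2*y1^2 + (-3)*x2^2*y0^2*y1*y2 + x2^2*y0^2*y1^2 + (3)*x2^2*x3*y0^2*y1 + (-3)*x2^3*y0^2*y1.
Definition hh13 (x0 x1 x2 x3 y0 y1 y2 y3 : R) : R :=
  (-3)*y0^2*y1*y3^3 + (3)*y0^2*y1*y2*y3^2 + (3)*y0^2*y1*y2^3 + y0^2*y1^2*y3^2 + (-1)*y0^2*y1^2*y2*y3 + (-1)*y0^2*y1^2*y2^2 + y0^2*y1^3*y2 + (-3)*y0^2*y1^4 + (-3)*x3*y0^2*y1*y3^2 + (3)*x3*y0^2*y1*y2*y3 + x3*y0^2*y1^2*y3 + (-1)*x3*y0^2*y1^2*y2 + (-3)*x3^2*y0^2*y1*y3 + (3)*x3^2*y0^2*y1*y2 + x3^2*y0^2*y1^2 + (-3)*x3^3*y0^2*y1.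
Definition hh20 (x0 x1 x2 x3 y0 y1 y2 y3 : R) : R :=
  (-3)*x2*x3^4*y0 + x2^2*x3^3*y0 + (-3)*x2^4*x3*y0 + (5)*x2^5*y0 + (3)*x1*x2*x3^3*y0 + (-1)*x1*x2^2*x3^2*y0 + x1*x2^3*x3*y0 + (-3)*x1*x2^4*y0 + (-1)*x1^2*x2^2*x3*y0 + (3)*x1^3*x2*x3*y0 + x1^3*x2^2*y0 + (-3)*x1^4*x2*y0 + (-3)*x0*x2*x3^4 + x0*x2^2*x3^3 + (-3)*x0*x2^4*x3 + (5)*x0*x2^5 + (3)*x0*x1*x2*x3^3 + (-1)*x0*x1*x2^2*x3^2 + x0*x1*x2^3*x3 + (-3)*x0*x1*x2^4 + (-1)*x0*x1^2*x2^2*x3 + (3)*x0*x1^3*x2*x3 + x0*x1^3*x2^2 + (-3)*x0*x1^4*x2.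
Definition hh21 (x0 x1 x2 x3 y0 y1 y2 y3 : R) : R :=
  (-3)*x2*y0^2*y1^3 + (3)*x2*x3*y0^2*y1^2 + (3)*x2*x3^3*y0^2 + x2^2*y0^2*y1^2 + (-1)*x2^2*x3*y0^2*y1 + (-1)*x2^2*x3^2*y0^2 + x2^3*x3*y0^2 + (-3)*x2^4*y0^2 + (-3)*x1*x2*y0^2*y1^2 + (3)*x1*x2*x3*y0^2*y1 + x1*x2^2*y0^2*y1 + (-1)*x1*x2^2*x3*y0^2 + (-3)*x1^2*x2*y0^2*y1 + (3)*x1^2*x2*x3*y0^2 + x1^2*x2^2*y0^2 + (-3)*x1^3*x2*y0^2.
Definition hh22 (x0 x1 x2 x3 y0 y1 y2 y3 : R) : R :=
  (5)*y0^2*y2^4 + (-3)*y0^2*y1*y2^3 + y0^2*y1^3*y2 + (-3)*y0^2*y1^4 + (-3)*x3*y0^2*y2^3 + x3*y0^2*y1*y2^2 + (-1)*x3*y0^2*y1^2*y2 + (3)*x3*y0^2*y1^3 + (-1)*x3^2*y0^2*y1*y2 + x3^3*y0^2*y2 + (3)*x3^3*y0^2*y1 + (-3)*x3^4*y0^2 + (5)*x2*y0^2*y2^3 + (-3)*x2*y0^2*y1*y2^2 + x2*y0^2*y1^3 + (-3)*x2*x3*y0^2*y2^2 + x2*x3*y0^2*y1*y2 + (-1)*x2*x3*y0^2*y1^2 + (-1)*x2*x3^2*y0^2*y1 + x2*x3^3*y0^2 + (5)*x2^2*y0^2*y2^2 + (-3)*x2^2*y0^2*y1*y2 + (-3)*x2^2*x3*y0^2*y2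 + x2^2*x3*y0^2*y1 + (5)*x2^3*y0^2*y2 + (-3)*x2^3*y0^2*y1 + (-3)*x2^3*x3*y0^2 + (5)*x2^4*y0^2.
Definition hh23 (x0 x1 x2 x3 y0 y1 y2 y3 : R) : R :=
  (-3)*y0^2*y2*y3^3 + y0^2*y2^2*y3^2 + (-3)*y0^2*y2^4 + (3)*y0^2*y1*y2*y3^2 + (-1)*y0^2*y1*y2^2*y3 + y0^2*y1*y2^3 + (-1)*y0^2*y1^2*y2^2 + (3)*y0^2*y1^3*y2 + (-3)*x3*y0^2*y2*y3^2 + x3*y0^2*y2^2*y3 + (3)*x3*y0^2*y1*y2*y3 + (-1)*x3*y0^2*y1*y2^2 + (-3)*x3^2*y0^2*y2*y3 + x3^2*y0^2*y2^2 + (3)*x3^2*y0^2*y1*y2 + (-3)*x3^3*y0^2*y2.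
Definition hh30 (x0 x1 x2 x3 y0 y1 y2 y3 : R) : R :=
  (5)*x3^5*y0 + (-3)*x2*x3^4*y0 + x2^3*x3^2*y0 + (-3)*x2^4*x3*y0 + (-3)*x1*x3^4*y0 + x1*x2*x3^3*y0 + (-1)*x1*x2^2*x3^2*y0 + (3)*x1*x2^3*x3*y0 + (-1)*x1^2*x2*x3^2*y0 + x1^3*x3^2*y0 + (3)*x1^3*x2*x3*y0 + (-3)*x1^4*x3*y0 + (5)*x0*x3^5 + (-3)*x0*x2*x3^4 + x0*x2^3*x3^2 + (-3)*x0*x2^4*x3 + (-3)*x0*x1*x3^4 + x0*x1*x2*x3^3 + (-1)*x0*x1*x2^2*x3^2 + (3)*x0*x1*x2^3*x3 + (-1)*x0*x1^2*x2*x3^2 + x0*x1^3*x3^2 + (3)*x0*x1^3*x2*x3 + (-3)*x0*x1^4*x3.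
Definition hh31 (x0 x1 x2 x3 y0 y1 y2 y3 : R) : R :=
  (-3)*x3*y0^2*y1^3 + x3^2*y0^2*y1^2 + (-3)*x3^4*y0^2 + (3)*x2*x3*y0^2*y1^2 + (-1)*x2*x3^2*y0^2*y1 + x2*x3^3*y0^2 + (-1)*x2^2*x3^2*y0^2 + (3)*x2^3*x3*y0^2 + (-3)*x1*x3*y0^2*y1^2 + x1*x3^2*y0^2*y1 + (3)*x1*x2*x3*y0^2*y1 + (-1)*x1*x2*x3^2*y0^2 + (-3)*x1^2*x3*y0^2*y1 + x1^2*x3^2*y0^2 + (3)*x1^2*x2*x3*y0^2 + (-3)*x1^3*x3*y0^2.
Definition hh32 (x0 x1 x2 x3 y0 y1 y2 y3 : R) : R :=
  (-3)*x3*y0^2*y2^3 + (3)*x3*y0^2*y1*y2^2 + (3)*x3*y0^2*y1^3 + x3^2*y0^2*y2^2 + (-1)*x3^2*y0^2*y1*y2 + (-1)*x3^2*y0^2*y1^2 + x3^3*y0^2*y1 + (-3)*x3^4*y0^2 + (-3)*x2*x3*y0^2*y2^2 + (3)*x2*x3*y0^2*y1*y2 + x2*x3^2*y0^2*y2 + (-1)*x2*x3^2*y0^2*y1 + (-3)*x2^2*x3*y0^2*y2 + (3)*x2^2*x3*y0^2*y1 + x2^2*x3^2*y0^2 + (-3)*x2^3*x3*y0^2.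
Definition hh33 (x0 x1 x2 x3 y0 y1 y2 y3 : R) : R :=
  (5)*y0^2*y3^4 + (-3)*y0^2*y2*y3^3 + y0^2*y2^3*y3 + (-3)*y0^2*y2^4 + (-3)*y0^2*y1*y3^3 + y0^2*y1*y2*y3^2 + (-1)*y0^2*y1*y2^2*y3 + (3)*y0^2*y1*y2^3 + (-1)*y0^2*y1^2*y2*y3 + y0^2*y1^3*y3 + (3)*y0^2*y1^3*y2 + (-3)*y0^2*y1^4 + (5)*x3*y0^2*y3^3 + (-3)*x3*y0^2*y2*y3^2 + x3*y0^2*y2^3 + (-3)*x3*y0^2*y1*y3^2 + x3*y0^2*y1*y2*y3 + (-1)*x3*y0^2*y1*y2^2 + (-1)*x3*y0^2*y1^2*y2 + x3*y0^2*y1^3 + (5)*x3^2*y0^2*y3^2 + (-3)*x3^2*y0^2*y2*y3 + (-3)*x3^2*y0^2*y1*y3 + x3^2*y0^2*y1*y2 + (5)*x3^3*y0^2*y3 + (-3)*x3^3*y0^2*y2 + (-3)*x3^3*y0^2*y1 + (5)*x3^4*y0^2.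
Lemma ff0_diff x0 x1 x2 x3 y0 y1 y2 y3 : ff0 x0 x1 x2 x3 - ff0 y0 y1 y2 y3 =
  (x0-y0)*hh00 x0 x1 x2 x3 y0 y1 y2 y3 + (x1-y1)*hh01 x0 x1 x2 x3 y0 y1 y2 y3
  + (x2-y2)*hh02 x0 x1 x2 x3 y0 y1 y2 y3 + (x3-y3)*hh03 x0 x1 x2 x3 y0 y1 y2 y3.
Proof. unfold ff0, hh00, hh01, hh02, hh03, pp. ring. Qed.
Lemma ff1_diff x0 x1 x2 x3 y0 y1 y2 y3 : ff1 x0 x1 x2 x3 - ff1 y0 y1 y2 y3 =
  (x0-y0)*hh10 x0 x1 x2 x3 y0 y1 y2 y3 + (x1-y1)*hh11 x0 x1 x2 x3 y0 y1 y2 y3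
  + (x2-y2)*hh12 x0 x1 x2 x3 y0 y1 y2 y3 + (x3-y3)*hh13 x0 x1 x2 x3 y0 y1 y2 y3.
Proof. unfold ff1, hh10, hh11, hh12, hh13, qq. ring. Qed.
Lemma ff2_diff x0 x1 x2 x3 y0 y1 y2 y3 : ff2 x0 x1 x2 x3 - ff2 y0 y1 y2 y3 =
  (x0-y0)*hh20 x0 x1 x2 x3 y0 y1 y2 y3 + (x1-y1)*hh21 x0 x1 x2 x3 y0 y1 y2 y3
  + (x2-y2)*hh22 x0 x1 x2 x3 y0 y1 y2 y3 + (x3-y3)*hh23 x0 x1 x2 x3 y0 y1 y2 y3.
Proof. unfold ff2, hh20, hh21, hh22, hh23, qq. ring. Qed.
Lemma ff3_diff x0 x1 x2 x3 y0 y1 y2 y3 : ff3 x0 x1 x2 x3 - ff3 y0 y1 y2 y3 =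
  (x0-y0)*hh30 x0 x1 x2 x3 y0 y1 y2 y3 + (x1-y1)*hh31 x0 x1 x2 x3 y0 y1 y2 y3
  + (x2-y2)*hh32 x0 x1 x2 x3 y0 y1 y2 y3 + (x3-y3)*hh33 x0 x1 x2 x3 y0 y1 y2 y3.
Proof. unfold ff3, hh30, hh31, hh32, hh33, qq. ring. Qed.

Definition ext (f : R -> R) (t : R) := f (Rmax 0 t).

Lemma cont_pow (f : R -> R) n x : continuity_pt f x -> continuity_pt (fun t => f t ^ n) x.
Proof.
  intro H; induction n as [|n IH].
  - simpl. apply (continuity_pt_const (fun _ => 1)). intros ? ?; reflexivity.
  - simpl. apply (continuity_pt_mult f (fun t => f t ^ n)); auto.
Qed.

Ltac contac :=
 match goal with
 | |- continuity_pt (fun _ => ?c) _ => apply (continuity_pt_const (fun _ => c)); intros ? ?; reflexivity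
 | |- continuity_pt (fun t => @?A t + @?B t) _ => apply (continuity_pt_plus A B)
 | |- continuity_pt (fun t => @?A t - @?B t) _ => apply (continuity_pt_minus A B)
 | |- continuity_pt (fun t => @?A t * @?B t) _ => apply (continuity_pt_mult A B)
 | |- continuity_pt (fun t => - @?A t) _ => apply (continuity_pt_opp A)
 | |- continuity_pt (fun t => @?A t ^ ?n) _ => apply (cont_pow A n)
 | H : forall t, continuity_pt ?f t |- continuity_pt (fun t => ?f t) _ => apply H
 end.

Lemma deriv_cont f t l : derivable_pt_lim f t l -> continuity_pt f t.
Proof. intro H. apply derivable_continuous_pt. exists l. exact H. Qed.

Lemma cont_intro f t : (forall eps, 0 < eps -> exists al, 0 < al /\ forall x, Rabs (x - t) < al -> Rabs (f x - f t) < eps) -> continuity_pt f t.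
Proof.
  intros H eps Heps. destruct (H eps Heps) as [al [Hal Hf]]. exists al. split. lra.
  intros x [_ Hx]. apply Hf. exact Hx.
Qed.

Lemma cont_elim f t : continuity_pt f t -> forall eps, 0 < eps -> exists al, 0 < al /\ forall x, Rabs (x - t) < al -> Rabs (f x - f t) < eps.
Proof.
  intros H eps Heps. destruct (H eps Heps) as [al [Hal Hf]]. exists al. split. lra.
  intros x Hx. destruct (Req_dec x t). subst. rewrite Rminus_diag, Rabs_R0. lra.
  apply Hf. split. split. exact I. auto. exact Hx.
Qed.

Lemma ext_cont f : (forall t, 0 < t -> continuity_pt f t) -> right_cont0 f ->
  forall t, continuity_pt (ext f) t.
Proof.
  intros Hc H0 t. apply cont_intro. unfold ext. intros eps Heps.
  destruct (Rlt_dec 0 t) as [Ht|Ht].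
  - destruct (cont_elim f t (Hc t Ht) eps Heps) as [al [Hal Hf]].
    exists (Rmin al t). split. apply Rmin_pos; lra.
    intros x Hx.
    assert (Hxp : 0 < x). { assert (Rabs (x - t) < t) by (eapply Rlt_le_trans; [exact Hx| apply Rmin_r]).
      apply Rabs_def2 in H. lra. }
    rewrite !Rmax_right by lra. apply Hf.
    eapply Rlt_le_trans; [exact Hx| apply Rmin_l].
  - destruct (Rlt_dec t 0) as [Ht'|Ht'].
    + exists (-t). split. lra. intros x Hx.
      apply Rabs_def2 in Hx. rewrite !Rmax_left by lra. rewrite Rminus_diag, Rabs_R0. lra.
    + assert (t = 0) by lra. subst t.
      destruct (H0 eps Heps) as [de [Hde Hf]]. exists de. split. lra.
      intros x Hx. rewrite Rminus_0_r in Hx.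
      rewrite (Rmax_left 0 0) by lra.
      destruct (Rle_dec 0 x).
      * rewrite Rmax_right by lra. apply Hf. split. lra. apply Rabs_def2 in Hx. lra.
      * rewrite Rmax_left by lra. rewrite Rminus_diag, Rabs_R0. lra.
Qed.

Lemma locally_pos t : 0 < t -> locally t (fun s => 0 < s).
Proof.
  intro Ht. exists (mkposreal t Ht). intros s Hs. simpl in Hs.
  unfold ball in Hs; simpl in Hs. unfold AbsRing_ball, abs, minus, plus, opp in Hs; simpl in Hs.
  apply Rabs_def2 in Hs. lra.
Qed.

Lemma ext_deriv f t l : 0 < t -> derivable_pt_lim f t l -> derivable_pt_lim (ext f) t l.
Proof.
  intros Ht H. apply is_derive_Reals. apply is_derive_Reals in H.
  apply (is_derive_ext_loc f). 2: exact H.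
  apply (filter_imp (fun s => 0 < s)). intros s Hs. unfold ext. rewrite Rmax_right; lra.
  apply locally_pos; exact Ht.
Qed.

Lemma ext_pos f t : 0 < t -> ext f t = f t.
Proof. intro; unfold ext; rewrite Rmax_right; lra. Qed.

Lemma Derive_eta f t l : is_derive f t l -> Derive (fun x => f x) t = l.
Proof. intro H. apply is_derive_unique. exact H. Qed.

Lemma nonincr (f df : R -> R) a b : a <= b ->
  (forall t, a <= t <= b -> derivable_pt_lim f t (df t)) ->
  (forall t, a <= t <= b -> df t <= 0) -> f b <= f a.
Proof.
  intros Hab Hd Hs. destruct (Req_dec a b). subst; lra.
  destruct (MVT_cor2 f df a b) as [c [Hc1 Hc2]]. lra. intros; apply Hd; lra.
  assert (df c <= 0) by (apply Hs; lra). nra.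
Qed.

Lemma gronwall (e de : R -> R) K T : 0 < T ->
  (forall t, continuity_pt e t) -> e 0 = 0 -> 0 <= e T ->
  (forall t, 0 < t <= T -> derivable_pt_lim e t (de t) /\ de t <= K * e t) -> e T = 0.
Proof.
  intros HT Hc He0 HeT Hd.
  set (f := fun t => e t * exp (- K * t)).
  assert (Hmon : forall eps, 0 < eps < T -> f T <= f eps).
  { intros eps Heps.
    apply (nonincr f (fun t => de t * exp (-K*t) + e t * (exp (- K * t) * (-K)))). lra.
    - intros t Ht. destruct (Hd t ltac:(lra)) as [H1 _].
      apply is_derive_Reals. unfold f. auto_derive. apply is_derive_Reals in H1. eexists; eassumption.
      rewrite (Derive_eta e t (de t)). ring. apply is_derive_Reals; auto.
    - intros t Ht. destruct (Hd t ltac:(lra)) as [_ H2].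
      assert (0 < exp (-K*t)) by apply exp_pos. nra. }
  assert (f T <= 0).
  { destruct (Rle_dec (f T) 0) as [h|h]. exact h. exfalso.
    assert (Hfc : continuity_pt f 0).
    { unfold f. apply (continuity_pt_mult e (fun t => exp (-K*t))). auto.
      apply (continuity_pt_comp (fun t => -K*t) exp).
      apply (continuity_pt_mult (fun _ => -K) (fun t => t)). apply continuity_pt_const. intros ? ?; reflexivity.
      apply derivable_continuous_pt, derivable_pt_id. apply derivable_continuous_pt, derivable_pt_exp. }
    destruct (cont_elim f 0 Hfc (f T) ltac:(lra)) as [al [Hal Hf]].
    set (eps := Rmin (al/2) (T/2)).
    assert (0 < eps) by (unfold eps; apply Rmin_pos; lra).
    assert (eps <= al/2) by apply Rmin_l. assert (eps <= T/2) by apply Rmin_r.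
    specialize (Hmon eps ltac:(lra)).
    assert (Habs: Rabs (f eps - f 0) < f T). { apply Hf. rewrite Rminus_0_r, Rabs_pos_eq; lra. }
    unfold f at 2 in Habs. rewrite He0, Rmult_0_l in Habs. rewrite Rminus_0_r in Habs.
    apply Rabs_def2 in Habs. lra. }
  unfold f in H. assert (0 < exp (-K*T)) by apply exp_pos. nra.
Qed.

Lemma S3_cont h0 h1 h2 h3 g0 g1 g2 g3 : S3_global_solution h0 h1 h2 h3 g0 g1 g2 g3 ->
  (forall t, continuity_pt (ext g0) t) /\ (forall t, continuity_pt (ext g1) t) /\
  (forall t, continuity_pt (ext g2) t) /\ (forall t, continuity_pt (ext g3) t).
Proof.
  intros (_&_&_&_&C0&C1&C2&C3&Hd).
  repeat split; apply ext_cont; auto; intros t Ht; destruct (Hd t Ht) as (D0&D1&D2&D3);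
   eapply deriv_cont; eassumption.
Qed.

Lemma sq4_zero a b c d : a^2+b^2+c^2+d^2 = 0 -> a = 0 /\ b = 0 /\ c = 0 /\ d = 0.
Proof.
  intro H. pose proof (pow2_ge_0 a). pose proof (pow2_ge_0 b). pose proof (pow2_ge_0 c). pose proof (pow2_ge_0 d).
  assert (Z : forall x, x^2 = 0 -> x = 0).
  { intros x Hx. destruct (Req_dec x 0); auto. exfalso. apply (pow_nonzero x 2); auto. }
  repeat split; apply Z; lra.
Qed.

Section Uniq.
Variables h0 h1 h2 h3 : R.
Variables g0 g1 g2 g3 G0 G1 G2 G3 : R -> R.
Hypothesis Hg : S3_global_solution h0 h1 h2 h3 g0 g1 g2 g3.
Hypothesis HG : S3_global_solution h0 h1 h2 h3 G0 G1 G2 G3.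

Let be := beta h0 h1 h2 h3.
Let x0 := ext g0. Let x1 := ext g1. Let x2 := ext g2. Let x3 := ext g3.
Let y0 := ext G0. Let y1 := ext G1. Let y2 := ext G2. Let y3 := ext G3.

Let H00 t := hh00 (x0 t) (x1 t) (x2 t) (x3 t) (y0 t) (y1 t) (y2 t) (y3 t).
Let H01 t := hh01 (x0 t) (x1 t) (x2 t) (x3 t) (y0 t) (y1 t) (y2 t) (y3 t).
Let H02 t := hh02 (x0 t) (x1 t) (x2 t) (x3 t) (y0 t) (y1 t) (y2 t) (y3 t).
Let H03 t := hh03 (x0 t) (x1 t) (x2 t) (x3 t) (y0 t) (y1 t) (y2 t) (y3 t).
Let H10 t := hh10 (x0 t) (x1 t) (x2 t) (x3 t) (y0 t) (y1 t) (y2 t) (y3 t).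
Let H11 t := hh11 (x0 t) (x1 t) (x2 t) (x3 t) (y0 t) (y1 t) (y2 t) (y3 t).
Let H12 t := hh12 (x0 t) (x1 t) (x2 t) (x3 t) (y0 t) (y1 t) (y2 t) (y3 t).
Let H13 t := hh13 (x0 t) (x1 t) (x2 t) (x3 t) (y0 t) (y1 t) (y2 t) (y3 t).
Let H20 t := hh20 (x0 t) (x1 t) (x2 t) (x3 t) (y0 t) (y1 t) (y2 t) (y3 t).
Let H21 t := hh21 (x0 t) (x1 t) (x2 t) (x3 t) (y0 t) (y1 t) (y2 t) (y3 t).
Let H22 t := hh22 (x0 t) (x1 t) (x2 t) (x3 t) (y0 t) (y1 t) (y2 t) (y3 t).
Let H23 t := hh23 (x0 t) (x1 t) (x2 t) (x3 t) (y0 t) (y1 t) (y2 t) (y3 t).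
Let H30 t := hh30 (x0 t) (x1 t) (x2 t) (x3 t) (y0 t) (y1 t) (y2 t) (y3 t).
Let H31 t := hh31 (x0 t) (x1 t) (x2 t) (x3 t) (y0 t) (y1 t) (y2 t) (y3 t).
Let H32 t := hh32 (x0 t) (x1 t) (x2 t) (x3 t) (y0 t) (y1 t) (y2 t) (y3 t).
Let H33 t := hh33 (x0 t) (x1 t) (x2 t) (x3 t) (y0 t) (y1 t) (y2 t) (y3 t).

Let S t := H00 t ^2 + H01 t ^2 + H02 t ^2 + H03 t ^2 + H10 t ^2 + H11 t ^2 + H12 t ^2 + H13 t ^2
  + H20 t ^2 + H21 t ^2 + H22 t ^2 + H23 t ^2 + H30 t ^2 + H31 t ^2 + H32 t ^2 + H33 t ^2.

Let e t := (x0 t - y0 t)^2 + (x1 t - y1 t)^2 + (x2 t - y2 t)^2 + (x3 t - y3 t)^2.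

Lemma S_cont : forall t, continuity_pt S t.
Proof.
  destruct (S3_cont _ _ _ _ _ _ _ _ Hg) as (C0&C1&C2&C3).
  destruct (S3_cont _ _ _ _ _ _ _ _ HG) as (D0&D1&D2&D3).
  intro t. unfold S, H00, H01, H02, H03, H10, H11, H12, H13, H20, H21, H22, H23, H30, H31, H32, H33,
    hh00, hh01, hh02, hh03, hh10, hh11, hh12, hh13, hh20, hh21, hh22, hh23, hh30, hh31, hh32, hh33.
  repeat contac.
Qed.

Lemma e_cont : forall t, continuity_pt e t.
Proof.
  destruct (S3_cont _ _ _ _ _ _ _ _ Hg) as (C0&C1&C2&C3).
  destruct (S3_cont _ _ _ _ _ _ _ _ HG) as (D0&D1&D2&D3).
  intro t. unfold e. repeat contac.
Qed.

Lemma e_zero T : 0 < T -> e T = 0.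
Proof.
  intro HT.
  destruct (continuity_ab_maj S 0 T ltac:(lra) (fun c _ => S_cont c)) as [tm [Htm _]].
  set (M := S tm).
  pose proof Hg as Hg'. pose proof HG as HG'.
  destruct Hg' as (a0&a1&a2&a3&_&_&_&_&Dg).
  destruct HG' as (b0&b1&b2&b3&_&_&_&_&DG).
  set (de := fun t => 2 * (x0 t - y0 t) * (- be * (ff0 (x0 t) (x1 t) (x2 t) (x3 t) - ff0 (y0 t) (y1 t) (y2 t) (y3 t)))
     + 2 * (x1 t - y1 t) * (- be * (ff1 (x0 t) (x1 t) (x2 t) (x3 t) - ff1 (y0 t) (y1 t) (y2 t) (y3 t)))
     + 2 * (x2 t - y2 t) * (- be * (ff2 (x0 t) (x1 t) (x2 t) (x3 t) - ff2 (y0 t) (y1 t) (y2 t) (y3 t)))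
     + 2 * (x3 t - y3 t) * (- be * (ff3 (x0 t) (x1 t) (x2 t) (x3 t) - ff3 (y0 t) (y1 t) (y2 t) (y3 t)))).
  apply (gronwall e de (be^2 * M + 4) T HT e_cont).
  - unfold e, x0, x1, x2, x3, y0, y1, y2, y3, ext. rewrite Rmax_left by lra.
    rewrite a0, a1, a2, a3, b0, b1, b2, b3. ring.
  - unfold e. repeat apply Rplus_le_le_0_compat; apply pow2_ge_0.
  - intros t Ht.
    destruct (Dg t ltac:(lra)) as (E0&E1&E2&E3).
    destruct (DG t ltac:(lra)) as (F0&F1&F2&F3).
    apply (ext_deriv _ t _ ltac:(lra)) in E0. apply (ext_deriv _ t _ ltac:(lra)) in E1.
    apply (ext_deriv _ t _ ltac:(lra)) in E2. apply (ext_deriv _ t _ ltac:(lra)) in E3.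
    apply (ext_deriv _ t _ ltac:(lra)) in F0. apply (ext_deriv _ t _ ltac:(lra)) in F1.
    apply (ext_deriv _ t _ ltac:(lra)) in F2. apply (ext_deriv _ t _ ltac:(lra)) in F3.
    rewrite <- (ext_pos g0 t) in E0, E1, E2, E3 by lra.
    rewrite <- (ext_pos g1 t) in E0, E1, E2, E3 by lra.
    rewrite <- (ext_pos g2 t) in E0, E1, E2, E3 by lra.
    rewrite <- (ext_pos g3 t) in E0, E1, E2, E3 by lra.
    rewrite <- (ext_pos G0 t) in F0, F1, F2, F3 by lra.
    rewrite <- (ext_pos G1 t) in F0, F1, F2, F3 by lra.
    rewrite <- (ext_pos G2 t) in F0, F1, F2, F3 by lra.
    rewrite <- (ext_pos G3 t) in F0, F1, F2, F3 by lra.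
    apply is_derive_Reals in E0, E1, E2, E3, F0, F1, F2, F3.
    split.
    + apply is_derive_Reals. unfold e.
      auto_derive. repeat split; eexists; eassumption.
      rewrite (Derive_eta x0 _ _ E0), (Derive_eta x1 _ _ E1), (Derive_eta x2 _ _ E2), (Derive_eta x3 _ _ E3),
        (Derive_eta y0 _ _ F0), (Derive_eta y1 _ _ F1), (Derive_eta y2 _ _ F2), (Derive_eta y3 _ _ F3).
      unfold de, ff0, ff1, ff2, ff3, x0, x1, x2, x3, y0, y1, y2, y3. fold be. ring.
    + assert (HS : S t <= M) by (apply Htm; lra).
      unfold de. rewrite ff0_diff, ff1_diff, ff2_diff, ff3_diff.
      fold (H00 t) (H01 t) (H02 t) (H03 t) (H10 t) (H11 t) (H12 t) (H13 t)
           (H20 t) (H21 t) (H22 t) (H23 t) (H30 t) (H31 t) (H32 t) (H33 t).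
      unfold S in HS. unfold e.
      set (d0 := x0 t - y0 t) in *. set (d1 := x1 t - y1 t) in *.
      set (d2 := x2 t - y2 t) in *. set (d3 := x3 t - y3 t) in *.
      assert (key : forall di dj h, 2 * di * (- be * (dj * h)) <= di^2 * (be^2 * h^2) + dj^2)
        by (intros di dj h; pose proof (pow2_ge_0 (be*h*di+dj)); nra).
      assert (R0 : d0^2 * (be^2 * (H00 t^2 + H01 t^2 + H02 t^2 + H03 t^2)) <= d0^2 * (be^2 * M))
        by (apply Rmult_le_compat_l; [nra|]; apply Rmult_le_compat_l; [nra|];
            assert (0 <= H10 t^2) by nra; assert (0 <= H11 t^2) by nra; assert (0 <= H12 t^2) by nra; assert (0 <= H13 t^2) by nra;
            assert (0 <= H20 t^2) by nra; assert (0 <= H21 t^2) by nra; assert (0 <= H22 t^2) by nra; assert (0 <= H23 t^2) by nra;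
            assert (0 <= H30 t^2) by nra; assert (0 <= H31 t^2) by nra; assert (0 <= H32 t^2) by nra; assert (0 <= H33 t^2) by nra; lra).
      assert (R1 : d1^2 * (be^2 * (H10 t^2 + H11 t^2 + H12 t^2 + H13 t^2)) <= d1^2 * (be^2 * M))
        by (apply Rmult_le_compat_l; [nra|]; apply Rmult_le_compat_l; [nra|];
            assert (0 <= H00 t^2) by nra; assert (0 <= H01 t^2) by nra; assert (0 <= H02 t^2) by nra; assert (0 <= H03 t^2) by nra;
            assert (0 <= H20 t^2) by nra; assert (0 <= H21 t^2) by nra; assert (0 <= H22 t^2) by nra; assert (0 <= H23 t^2) by nra;
            assert (0 <= H30 t^2) by nra; assert (0 <= H31 t^2) by nra; assert (0 <= H32 t^2) by nra; assert (0 <= H33 t^2) by nra; lra).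
      assert (R2 : d2^2 * (be^2 * (H20 t^2 + H21 t^2 + H22 t^2 + H23 t^2)) <= d2^2 * (be^2 * M))
        by (apply Rmult_le_compat_l; [nra|]; apply Rmult_le_compat_l; [nra|];
            assert (0 <= H10 t^2) by nra; assert (0 <= H11 t^2) by nra; assert (0 <= H12 t^2) by nra; assert (0 <= H13 t^2) by nra;
            assert (0 <= H00 t^2) by nra; assert (0 <= H01 t^2) by nra; assert (0 <= H02 t^2) by nra; assert (0 <= H03 t^2) by nra;
            assert (0 <= H30 t^2) by nra; assert (0 <= H31 t^2) by nra; assert (0 <= H32 t^2) by nra; assert (0 <= H33 t^2) by nra; lra).
      assert (R3 : d3^2 * (be^2 * (H30 t^2 + H31 t^2 + H32 t^2 + H33 t^2)) <= d3^2 * (be^2 * M))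
        by (apply Rmult_le_compat_l; [nra|]; apply Rmult_le_compat_l; [nra|];
            assert (0 <= H10 t^2) by nra; assert (0 <= H11 t^2) by nra; assert (0 <= H12 t^2) by nra; assert (0 <= H13 t^2) by nra;
            assert (0 <= H20 t^2) by nra; assert (0 <= H21 t^2) by nra; assert (0 <= H22 t^2) by nra; assert (0 <= H23 t^2) by nra;
            assert (0 <= H00 t^2) by nra; assert (0 <= H01 t^2) by nra; assert (0 <= H02 t^2) by nra; assert (0 <= H03 t^2) by nra; lra).
      repeat rewrite Rmult_plus_distr_l.
      pose proof (key d0 d0 (H00 t)). pose proof (key d0 d1 (H01 t)). pose proof (key d0 d2 (H02 t)). pose proof (key d0 d3 (H03 t)).
      pose proof (key d1 d0 (H10 t)). pose proof (key d1 d1 (H11 t)). pose proof (key d1 d2 (H12 t)). pose proof (key d1 d3 (H13 t)).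
      pose proof (key d2 d0 (H20 t)). pose proof (key d2 d1 (H21 t)). pose proof (key d2 d2 (H22 t)). pose proof (key d2 d3 (H23 t)).
      pose proof (key d3 d0 (H30 t)). pose proof (key d3 d1 (H31 t)). pose proof (key d3 d2 (H32 t)). pose proof (key d3 d3 (H33 t)).
      lra.
Qed.

Lemma uniq_all t : 0 <= t -> g0 t = G0 t /\ g1 t = G1 t /\ g2 t = G2 t /\ g3 t = G3 t.
Proof.
  intro Ht. destruct (Req_dec t 0) as [->|Ht0].
  - destruct Hg as (a0&a1&a2&a3&_). destruct HG as (b0&b1&b2&b3&_). rewrite a0,a1,a2,a3,b0,b1,b2,b3. tauto.
  - pose proof (e_zero t ltac:(lra)) as E. unfold e, x0, x1, x2, x3, y0, y1, y2, y3 in E.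
    rewrite !ext_pos in E by lra.
    apply sq4_zero in E. repeat split; lra.
Qed.

End Uniq.

Definition NN (t d s : R) := t^2*d^2 + t^2*d*s + t^2*s^2 + 4*t*d*s^2 + 2*t*s^3 + 3*d^2*s^2 + 3*d*s^3 + s^4.
Lemma NN_nonneg t d s : 0 <= t -> 0 <= d -> 0 <= s -> 0 <= NN t d s.
Proof.
  intros. unfold NN.
  repeat apply Rplus_le_le_0_compat; repeat apply Rmult_le_pos; try apply pow_le; lra.
Qed.

Lemma pp_nonneg x y z : 0 <= x -> 0 <= y -> 0 <= z -> 0 <= pp x y z.
Proof.
  intros Hx Hy Hz.
  destruct (Rle_dec x y); destruct (Rle_dec y z); destruct (Rle_dec x z).
  - replace (pp x y z) with (NN x (y-x) (z-y)) by (unfold pp, NN; ring). apply NN_nonneg; lra.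
  - lra.
  - replace (pp x y z) with (NN x (z-x) (y-z)) by (unfold pp, NN; ring). apply NN_nonneg; lra.
  - replace (pp x y z) with (NN z (x-z) (y-x)) by (unfold pp, NN; ring). apply NN_nonneg; lra.
  - replace (pp x y z) with (NN y (x-y) (z-x)) by (unfold pp, NN; ring). apply NN_nonneg; lra.
  - replace (pp x y z) with (NN y (z-y) (x-z)) by (unfold pp, NN; ring). apply NN_nonneg; lra.
  - lra.
  - replace (pp x y z) with (NN z (y-z) (x-y)) by (unfold pp, NN; ring). apply NN_nonneg; lra.
Qed.

Definition Sch (x y z : R) := x^4+y^4+z^4 - x^3*(y+z) - y^3*(x+z) - z^3*(x+y) + x*y*z*(x+y+z).

Lemma Sch_nonneg x y z : 0 <= x -> 0 <= y -> 0 <= z -> 0 <= Sch x y z.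
Proof.
  intros Hx Hy Hz.
  destruct (Rle_dec x y); destruct (Rle_dec y z); destruct (Rle_dec x z).
  - replace (Sch x y z) with (NN x (y-x) (z-y)) by (unfold Sch, NN; ring). apply NN_nonneg; lra.
  - lra.
  - replace (Sch x y z) with (NN x (z-x) (y-z)) by (unfold Sch, NN; ring). apply NN_nonneg; lra.
  - replace (Sch x y z) with (NN z (x-z) (y-x)) by (unfold Sch, NN; ring). apply NN_nonneg; lra.
  - replace (Sch x y z) with (NN y (x-y) (z-x)) by (unfold Sch, NN; ring). apply NN_nonneg; lra.
  - replace (Sch x y z) with (NN y (z-y) (x-z)) by (unfold Sch, NN; ring). apply NN_nonneg; lra.
  - lra.
  - replace (Sch x y z) with (NN z (y-z) (x-y)) by (unfold Sch, NN; ring). apply NN_nonneg; lra.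
Qed.

Lemma rr_sum x y z : rr x y z + rr y x z + rr z x y = 0.
Proof. unfold rr, pp, qq. field. Qed.

Lemma monb v w e i j : Rabs v <= e -> Rabs w <= e -> 0 <= e -> Rabs (v^i * w^j) <= e^(i+j).
Proof.
  intros Hv Hw He. rewrite Rabs_mult, <- !RPow_abs, pow_add.
  apply Rmult_le_compat; try apply pow_le; try apply Rabs_pos; apply pow_incr; split; auto; apply Rabs_pos.
Qed.
Lemma absle x a : Rabs x <= a -> -a <= x <= a.
Proof. intro H. unfold Rabs in H. destruct (Rcase_abs x); split; lra. Qed.

Definition LA (v w : R) : R := (44) + (-304)*(v^0*w^1) + (-354)*(v^0*w^2) + (-256)*(v^0*w^3) + (315)*(v^0*w^4) + (270)*(v^0*w^5) + (26)*(v^0*w^6) + (298)*(v^1*w^0) + (-651)*(v^1*w^1) + (-256)*(v^1*w^2) + (-792)*(v^1*w^3) + (-244)*(v^1*w^4) + (56)*(v^1*w^5) + (829)*(v^2*w^0) + (-964)*(v^2*w^1) + (315)*(v^2*w^2) + (-244)*(v^2*w^3) + (-148)*(v^2*w^4) + (1220)*(v^3*w^0) + (-924)*(v^3*w^1) + (270)*(v^3*w^2) + (56)*(v^3*w^3) + (1005)*(v^4*w^0) + (-466)*(v^4*w^1) + (26)*(v^4*w^2) + (440)*(v^5*w^0) + (-88)*(v^5*w^1) + (80)*(v^6*w^0).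
Definition LC (v w : R) : R := (44) + (298)*(v^0*w^1) + (829)*(v^0*w^2) + (1220)*(v^0*w^3) + (1005)*(v^0*w^4) + (440)*(v^0*w^5) + (80)*(v^0*w^6) + (-304)*(v^1*w^0) + (-651)*(v^1*w^1) + (-964)*(v^1*w^2) + (-924)*(v^1*w^3) + (-466)*(v^1*w^4) + (-88)*(v^1*w^5).
Ltac mon_bounds v w Hv Hw He := pose proof (monb v w (1/200) 0 1 Hv Hw He) as M0_1; replace ((1/200)^(0+1)) with (1/200) in M0_1 by (simpl; field); apply absle in M0_1; pose proof (monb v w (1/200) 0 2 Hv Hw He) as M0_2; replace ((1/200)^(0+2)) with (1/40000) in M0_2 by (simpl; field); apply absle in M0_2; pose proof (monb v w (1/200) 0 3 Hv Hw He) as M0_3; replace ((1/200)^(0+3)) with (1/8000000) in M0_3 by (simpl; field); apply absle in M0_3; pose proof (monb v w (1/200) 0 4 Hv Hw He) as M0_4; replace ((1/200)^(0+4)) with (1/1600000000) in M0_4 by (simpl; field); apply absle in M0_4; pose proof (monb v w (1/200) 0 5 Hv Hw He) as M0_5; replace ((1/200)^(0+5)) with (1/320000000000) in M0_5 by (simpl; field); apply absle in M0_5; pose proof (monb v w (1/200) 0 6 Hv Hw He) as M0_6; replace ((1/200)^(0+6)) with (1/64000000000000) in M0_6 by (simpl; field); apply absle in M0_6; pose proof (monb v w (1/200) 1 0 Hv Hw He) as M1_0; replace ((1/200)^(1+0)) with (1/200) in M1_0 by (simpl; field); apply absle in M1_0; pose proof (monb v w (1/200) 1 1 Hv Hw He)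 as M1_1; replace ((1/200)^(1+1)) with (1/40000) in M1_1 by (simpl; field); apply absle in M1_1; pose proof (monb v w (1/200) 1 2 Hv Hw He) as M1_2; replace ((1/200)^(1+2)) with (1/8000000) in M1_2 by (simpl; field); apply absle in M1_2; pose proof (monb v w (1/200) 1 3 Hv Hw He) as M1_3; replace ((1/200)^(1+3)) with (1/1600000000) in M1_3 by (simpl; field); apply absle in M1_3; pose proof (monb v w (1/200) 1 4 Hv Hw He) as M1_4; replace ((1/200)^(1+4)) with (1/320000000000) in M1_4 by (simpl; field); apply absle in M1_4; pose proof (monb v w (1/200) 1 5 Hv Hw He) as M1_5; replace ((1/200)^(1+5)) with (1/64000000000000) in M1_5 by (simpl; field); apply absle in M1_5; pose proof (monb v w (1/200) 2 0 Hv Hw He) as M2_0; replace ((1/200)^(2+0)) with (1/40000) in M2_0 by (simpl; field); apply absle in M2_0; pose proof (monb v w (1/200) 2 1 Hv Hw He) as M2_1; replace ((1/200)^(2+1)) with (1/8000000) in M2_1 by (simpl; field); apply absle in M2_1; pose proof (monb v w (1/200) 2 2 Hv Hw He) as M2_2; replace ((1/200)^(2+2)) with (1/1600000000) in M2_2 by (simpl; field); apply absle in M2_2; pose proof (monb v w (1/200) 2 3 Hv Hw He) as M2_3; replace ((1/200)^(2+3)) with (1/320000000000) in M2_3 by (simpl; field); apply absle in M2_3; pose proof (monb v w (1/200) 2 4 Hv Hw He) as M2_4; replace ((1/200)^(2+4)) with (1/64000000000000) in M2_4 by (simpl; field); apply absle in M2_4; pose proof (monb v w (1/200) 3 0 Hv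 Hw He) as M3_0; replace ((1/200)^(3+0)) with (1/8000000) in M3_0 by (simpl; field); apply absle in M3_0; pose proof (monb v w (1/200) 3 1 Hv Hw He) as M3_1; replace ((1/200)^(3+1)) with (1/1600000000) in M3_1 by (simpl; field); apply absle in M3_1; pose proof (monb v w (1/200) 3 2 Hv Hw He) as M3_2; replace ((1/200)^(3+2)) with (1/320000000000) in M3_2 by (simpl; field); apply absle in M3_2; pose proof (monb v w (1/200) 3 3 Hv Hw He) as M3_3; replace ((1/200)^(3+3)) with (1/64000000000000) in M3_3 by (simpl; field); apply absle in M3_3; pose proof (monb v w (1/200) 4 0 Hv Hw He) as M4_0; replace ((1/200)^(4+0)) with (1/1600000000) in M4_0 by (simpl; field); apply absle in M4_0; pose proof (monb v w (1/200) 4 1 Hv Hw He) as M4_1; replace ((1/200)^(4+1)) with (1/320000000000) in M4_1 by (simpl; field); apply absle in M4_1; pose proof (monb v w (1/200) 4 2 Hv Hw He) as M4_2; replace ((1/200)^(4+2)) with (1/64000000000000) in M4_2 by (simpl; field); apply absle in M4_2; pose proof (monb v w (1/200) 5 0 Hv Hw He) as M5_0; replace ((1/200)^(5+0)) with (1/320000000000) in M5_0 by (simpl; field); apply absle in M5_0; pose proof (monb v w (1/200) 5 1 Hv Hw He) as M5_1; replace ((1/200)^(5+1)) with (1/64000000000000) in M5_1 by (simpl; field); apply absle in M5_1; pose proof (monb v w (1/200) 6 0 Hv Hw He) as M6_0; replace ((1/200)^(6+0)) with (1/64000000000000) in M6_0 by (simpl; field); apply absle in M6_0; idtac.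

Lemma local_ineq v w : Rabs v <= 1/200 -> Rabs w <= 1/200 ->
  pp 1 (1+v) (1+w) <= rr (1+v) 1 (1+w) ^ 2 + rr (1+w) 1 (1+v) ^ 2.
Proof.
  intros Hv Hw.
  assert (He : 0 <= 1/200) by lra.
  assert (A : 40 <= LA v w) by (unfold LA; mon_bounds v w Hv Hw He; lra).
  assert (C : 40 <= LC v w) by (unfold LC; mon_bounds v w Hv Hw He; lra).
  assert (E : rr (1+v) 1 (1+w) ^ 2 + rr (1+w) 1 (1+v) ^ 2 - pp 1 (1+v) (1+w) =
     v^2 * LA v w - 71 * v * w + w^2 * LC v w) by (unfold LA, LC, rr, pp, qq; field).
  assert (0 <= v^2 * LA v w - 71 * v * w + w^2 * LC v w).
  { assert (v^2 * LA v w >= 40 * v^2) by nra. assert (w^2 * LC v w >= 40 * w^2) by nra.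
    pose proof (pow2_ge_0 (v-w)). pose proof (pow2_ge_0 v). pose proof (pow2_ge_0 w). nra. }
  lra.
Qed.

Lemma ball_abs (x y : R) (e : R) : ball x e y <-> Rabs (y - x) < e.
Proof. unfold ball; simpl. unfold AbsRing_ball, abs, minus, plus, opp; simpl. tauto. Qed.

Lemma conv_is_lim f l : conv_infty f l <-> is_lim f p_infty l.
Proof.
  unfold is_lim. split.
  - intro H. apply filterlim_locally. intro eps.
    destruct (H eps (cond_pos eps)) as [T HT]. exists T. intros x Hx. apply ball_abs. apply HT. lra.
  - intro H. intros eps Heps. pose proof (proj1 (filterlim_locally _ _) H (mkposreal eps Heps)) as H'.
    destruct H' as [M HM]. exists (M+1). intros t Ht. apply ball_abs. apply HM. lra.
Qed.

Lemma conv_cont f l F : conv_infty f l -> continuity_pt F l -> conv_infty (fun t => F (f t)) (F l).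
Proof.
  intros Hf HF eps Heps. destruct (cont_elim F l HF eps Heps) as [al [Hal HF']].
  destruct (Hf al Hal) as [T HT]. exists T. intros t Ht. apply HF'. apply HT; auto.
Qed.

Lemma conv_comp_infty f g l : conv_infty f l -> (forall M, exists T, forall t, T <= t -> M <= g t) ->
  conv_infty (fun t => f (g t)) l.
Proof.
  intros Hf Hg eps Heps. destruct (Hf eps Heps) as [T HT]. destruct (Hg T) as [T' HT'].
  exists T'. intros t Ht. apply HT. apply HT'; auto.
Qed.

Lemma conv_mult f g l m : conv_infty f l -> conv_infty g m -> conv_infty (fun t => f t * g t) (l * m).
Proof.
  intros Hf Hg. apply conv_is_lim. apply conv_is_lim in Hf, Hg.
  apply (is_lim_mult f g p_infty l m Hf Hg). simpl. auto.
Qed.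

Lemma conv_div f g l m : m <> 0 -> conv_infty f l -> conv_infty g m -> conv_infty (fun t => f t / g t) (l / m).
Proof.
  intros Hm Hf Hg. apply conv_is_lim. apply conv_is_lim in Hf, Hg.
  apply (is_lim_div f g p_infty l m Hf Hg). intro E; injection E; auto. simpl. auto.
Qed.

Lemma conv_ext f g l : (exists T, forall t, T <= t -> f t = g t) -> conv_infty f l -> conv_infty g l.
Proof.
  intros [T0 HT0] Hf eps Heps. destruct (Hf eps Heps) as [T HT]. exists (Rmax T T0).
  intros t Ht. rewrite <- HT0. apply HT. eapply Rle_trans; [apply Rmax_l|exact Ht].
  eapply Rle_trans; [apply Rmax_r|exact Ht].
Qed.

Lemma conv_pow f l n : conv_infty f l -> conv_infty (fun t => f t ^ n) (l ^ n).
Proof.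
  intro H. apply (conv_cont f l (fun x => x ^ n)). auto.
  apply derivable_continuous_pt. apply derivable_pt_pow.
Qed.

Lemma mono_lim (f : R -> R) B : (forall x y, 0 <= x <= y -> f x <= f y) -> (forall x, 0 <= x -> f x <= B) ->
  exists L, conv_infty f L /\ (forall x, 0 <= x -> f x <= L).
Proof.
  intros Hm Hb.
  set (E := fun y => exists x, 0 <= x /\ y = f x).
  assert (HE : bound E). { exists B. intros y [x [Hx ->]]. auto. }
  assert (HE' : exists y, E y). { exists (f 0). exists 0. split; lra. }
  destruct (completeness E HE HE') as [L [HL1 HL2]].
  exists L. split.
  - intros eps Heps.
    assert (exists x, 0 <= x /\ L - eps < f x).
    { apply NNPP. intro Hn. assert (is_upper_bound E (L - eps)).
      { intros y [x [Hx ->]]. destruct (Rle_dec (f x) (L - eps)); auto. exfalso; apply Hn. exists x; split; auto; lra. }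
      specialize (HL2 _ H). lra. }
    destruct H as [x0 [Hx0 Hfx0]]. exists x0. intros t Ht.
    assert (f x0 <= f t) by (apply Hm; lra).
    assert (f t <= L) by (apply HL1; exists t; split; auto; lra).
    rewrite Rabs_left1 by lra. lra.
  - intros x Hx. apply HL1. exists x; split; auto.
Qed.

Lemma inverse_fun (T k : R -> R) c0 : 0 < c0 -> (forall s, derivable_pt_lim T s (k s)) -> (forall s, c0 <= k s) -> T 0 = 0 ->
  exists tau : R -> R, (forall t, T (tau t) = t) /\ (forall t, derivable_pt_lim tau t (/ k (tau t))) /\
    (forall t, continuity_pt tau t) /\ tau 0 = 0 /\ (forall t, 0 < t -> 0 < tau t) /\
    (forall M, exists T0, forall t, T0 <= t -> M <= tau t).
Proof.
  intros Hc0 HT Hk HT0.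
  assert (mono : forall x y, x <= y -> c0 * (y - x) <= T y - T x).
  { intros x y Hxy. assert (H := nonincr (fun s => c0 * s - T s) (fun s => c0 - k s) x y Hxy).
    assert (c0 * y - T y <= c0 * x - T x). apply H.
    intros t _. apply is_derive_Reals. auto_derive. exists (k t). apply is_derive_Reals, HT.
    rewrite (Derive_eta T t (k t)) by (apply is_derive_Reals; auto). ring.
    intros t _. specialize (Hk t). lra. lra. }
  assert (Tc : continuity T). { intro x. apply (deriv_cont T x (k x)). apply HT. }
  assert (surj : forall t, exists s, T s = t).
  { intro t. set (a := - (Rabs t + 1) / c0). set (b := (Rabs t + 1) / c0).
    assert (a <= 0) by (unfold a; apply Rmult_le_0_r; [pose proof (Rabs_pos t); lra| left; apply Rinv_0_lt_compat; lra]).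
    assert (0 <= b) by (unfold b; apply Rmult_le_pos; [pose proof (Rabs_pos t); lra| left; apply Rinv_0_lt_compat; lra]).
    pose proof (mono a 0 H). pose proof (mono 0 b H0).
    assert (c0 * a = - (Rabs t + 1)) by (unfold a; field; lra).
    assert (c0 * b = (Rabs t + 1)) by (unfold b; field; lra).
    assert (T a < t) by (pose proof (Rle_abs t); pose proof (Rle_abs (-t)); rewrite Rabs_Ropp in *; lra).
    assert (t < T b) by (pose proof (Rle_abs t); lra).
    destruct (IVT_gen T a b t Tc) as [s [_ Hs]].
    split. eapply Rle_trans; [apply Rmin_l| lra]. eapply Rle_trans; [|apply Rmax_r]. lra.
    exists s; auto. }
  exists (fun t => proj1_sig (constructive_indefinite_description _ (surj t))).
  set (tau := fun t => proj1_sig (constructive_indefinite_description _ (surj t))).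
  assert (Htau : forall t, T (tau t) = t).
  { intro t. unfold tau. destruct (constructive_indefinite_description _ (surj t)). simpl. auto. }
  assert (inj : forall x y, T x = T y -> x = y).
  { intros x y E. destruct (Rtotal_order x y) as [h|[h|h]]; auto.
    pose proof (mono x y ltac:(lra)). nra. pose proof (mono y x ltac:(lra)). nra. }
  assert (Hlip : forall x y, x <= y -> c0 * (tau y - tau x) <= y - x).
  { intros x y Hxy. destruct (Rle_dec (tau x) (tau y)).
    - pose proof (mono _ _ r). rewrite !Htau in H. lra.
    - pose proof (mono (tau y) (tau x) ltac:(lra)). rewrite !Htau in H. nra. }
  assert (Hincr : forall x y, x <= y -> tau x <= tau y).
  { intros x y Hxy. destruct (Rle_dec (tau x) (tau y)); auto.
    pose proof (mono (tau y) (tau x) ltac:(lra)). rewrite !Htau in H. nra. }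
  assert (Hcont : forall t, continuity_pt tau t).
  { intro t. apply cont_intro. intros eps Heps. exists (eps * c0). split. nra.
    intros x Hx. destruct (Rle_dec x t).
    - pose proof (Hlip x t r). pose proof (Hincr x t r). rewrite Rabs_left1 by lra.
      rewrite Rabs_left1 in Hx by lra. apply Rmult_lt_reg_l with c0; lra.
    - pose proof (Hlip t x ltac:(lra)). pose proof (Hincr t x ltac:(lra)). rewrite Rabs_pos_eq by lra.
      rewrite Rabs_pos_eq in Hx by lra. apply Rmult_lt_reg_l with c0; lra. }
  fold tau. split; [exact Htau|]. split; [|split; [exact Hcont|]].
  - intro t.
    assert (Prf : forall a, tau (t-1) <= a <= tau (t+1) -> derivable_pt T a).
    { intros a _. exists (k a). apply HT. }
    assert (Hi : tau (t-1) <= tau t <= tau (t+1)) by (split; apply Hincr; lra).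
    pose proof (derivable_pt_lim_recip_interv T tau (t-1) (t+1) t Prf (Hcont t) ltac:(lra) ltac:(lra) Hi) as HH.
    assert (E : derive_pt T (tau t) (Prf (tau t) Hi) = k (tau t)).
    { apply derive_pt_eq_0. apply HT. }
    rewrite E in HH. change (derivable_pt_lim tau t (/ k (tau t))).
    replace (/ k (tau t)) with (1 / k (tau t)) by (field; specialize (Hk (tau t)); lra).
    apply HH. intros x _. unfold comp, id. apply Htau. specialize (Hk (tau t)); lra.
  - split. change (tau 0 = 0). apply inj. rewrite Htau. auto.
    split.
    + intros t Ht. change (0 < tau t). assert (tau 0 = 0) by (apply inj; rewrite Htau; auto).
      destruct (Rle_dec (tau t) 0); auto. 2: lra. pose proof (mono (tau t) 0 r). rewrite Htau, HT0 in H0. nra.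
    + intro M. exists (T M). intros t Ht. change (M <= tau t). destruct (Rle_dec M (tau t)); auto.
      pose proof (mono (tau t) M ltac:(lra)). rewrite Htau in H. nra.
Qed.

Ltac contac2 :=
 match goal with
 | H : forall t, continuity_pt ?F t |- continuity_pt ?F _ => apply H
 | |- continuity_pt (fun _ => ?c) _ => apply (continuity_pt_const (fun _ => c)); intros ? ?; reflexivity
 | |- continuity_pt (fun t => @?A t + @?B t) _ => apply (continuity_pt_plus A B)
 | |- continuity_pt (fun t => @?A t - @?B t) _ => apply (continuity_pt_minus A B)
 | |- continuity_pt (fun t => @?A t * @?B t) _ => apply (continuity_pt_mult A B)
 | |- continuity_pt (fun t => @?A t / @?B t) _ => apply (continuity_pt_div A B)
 | |- continuity_pt (fun t => / @?A t) _ => apply (continuity_pt_inv A)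
 | |- continuity_pt (fun t => - @?A t) _ => apply (continuity_pt_opp A)
 | |- continuity_pt (fun t => @?A t ^ ?n) _ => apply (cont_pow A n)
 | H : forall t, continuity_pt ?f t |- continuity_pt (fun t => ?f t) _ => apply H
 end.

Lemma Rpower_pos x y : 0 < Rpower x y.
Proof. unfold Rpower. apply exp_pos. Qed.

Lemma Rpower_cube x : 0 < x -> Rpower x (1/3) ^ 3 = x.
Proof.
  intro Hx. rewrite <- Rpower_pow by apply Rpower_pos. rewrite Rpower_mult.
  replace (1/3 * INR 3) with 1 by (simpl; field). apply Rpower_1; auto.
Qed.

Lemma cont_rc f : continuity_pt f 0 -> right_cont0 f.
Proof.
  intros H eps Heps. destruct (cont_elim f 0 H eps Heps) as [al [Hal Hf]]. exists al. split; auto.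
  intros t Ht. apply Hf. rewrite Rminus_0_r, Rabs_pos_eq; lra.
Qed.

Lemma RInt_deriv (f : R -> R) : (forall s, continuity_pt f s) -> forall s, is_derive (fun x => RInt f 0 x) s (f s).
Proof.
  intros Hf s. apply (is_derive_RInt f (fun x => RInt f 0 x) 0 s).
  apply filter_forall. intro x. apply (RInt_correct (V:=R_CompleteNormedModule)). apply (ex_RInt_continuous (V:=R_CompleteNormedModule)).
  intros z _. apply continuity_pt_filterlim. auto.
  apply continuity_pt_filterlim. auto.
Qed.

Lemma exp_le x y : x <= y -> exp x <= exp y.
Proof. intro H. destruct (Req_dec x y). subst; lra. left; apply exp_increasing; lra. Qed.

Section Construct.
Variables h0 h1 h2 h3 : R.
Hypotheses (Q0 : 0 < h0) (Q1 : 0 < h1) (Q2 : 0 < h2) (Q3 : 0 < h3).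
Let D := detH h0 h1 h2 h3.
Let be := beta h0 h1 h2 h3.
Let U0 := Rpower h0 (1/3).
Let dd := Rpower D (1/3).
Variables b c : R -> R.
Hypothesis HP : P_global_solution D (U0*h2) (U0*h3) b c.
Hypothesis Hbl : conv_infty b dd.
Hypothesis Hcl : conv_infty c dd.

Lemma Dpos : 0 < D. Proof. unfold D, detH. repeat apply Rmult_lt_0_compat; auto. Qed.
Lemma bepos : 0 < be.
Proof. unfold be, beta. pose proof Dpos. fold D. apply Rdiv_lt_0_compat. lra. apply Rmult_lt_0_compat. lra. apply pow_lt; auto. Qed.
Lemma U0pos : 0 < U0. Proof. apply Rpower_pos. Qed.
Lemma ddpos : 0 < dd. Proof. apply Rpower_pos. Qed.
Lemma U0cube : U0 ^ 3 = h0. Proof. apply Rpower_cube; auto. Qed.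
Lemma ddcube : dd ^ 3 = D. Proof. apply Rpower_cube. apply Dpos. Qed.

Let bb := ext b.
Let cb := ext c.
Let ab := fun s => D / (bb s * cb s).

Lemma bbpos s : 0 < bb s.
Proof. destruct HP as (_&_&_&_&Hpos&_). unfold bb, ext. apply Hpos. apply Rmax_l. Qed.
Lemma cbpos s : 0 < cb s.
Proof. destruct HP as (_&_&_&_&Hpos&_). unfold cb, ext. apply Hpos. apply Rmax_l. Qed.
Lemma abpos s : 0 < ab s.
Proof. unfold ab. pose proof (bbpos s). pose proof (cbpos s). pose proof Dpos.
  apply Rdiv_lt_0_compat; auto. apply Rmult_lt_0_compat; auto. Qed.

Lemma bb_deriv s : 0 < s -> is_derive bb s (- (2/3) * rr (bb s) (ab s) (cb s) * bb s).
Proof.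
  intro Hs. destruct HP as (_&_&_&_&_&Hd). destruct (Hd s Hs) as [Hb _].
  apply is_derive_Reals. unfold ab, bb, cb. rewrite !ext_pos by lra. apply ext_deriv; auto.
Qed.
Lemma cb_deriv s : 0 < s -> is_derive cb s (- (2/3) * rr (cb s) (ab s) (bb s) * cb s).
Proof.
  intro Hs. destruct HP as (_&_&_&_&_&Hd). destruct (Hd s Hs) as [_ Hc].
  apply is_derive_Reals. unfold ab, bb, cb. rewrite !ext_pos by lra. apply ext_deriv; auto.
Qed.

Lemma bb_cont s : continuity_pt bb s.
Proof.
  destruct HP as (_&_&Hr&_&_&Hd). apply ext_cont; auto. intros t Ht. destruct (Hd t Ht) as [H _].
  eapply deriv_cont; eauto.
Qed.
Lemma cb_cont s : continuity_pt cb s.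
Proof.
  destruct HP as (_&_&_&Hr&_&Hd). apply ext_cont; auto. intros t Ht. destruct (Hd t Ht) as [_ H].
  eapply deriv_cont; eauto.
Qed.

Let pf := fun s => pp (ab s) (bb s) (cb s).

Lemma pf_cont s : continuity_pt pf s.
Proof.
  pose proof bb_cont. pose proof cb_cont. unfold pf, ab, pp. repeat contac2.
  all: apply Rgt_not_eq, Rmult_lt_0_compat; [apply bbpos|apply cbpos].
Qed.

Lemma pf_nonneg s : 0 <= pf s.
Proof. unfold pf. apply pp_nonneg; left; [apply abpos|apply bbpos|apply cbpos]. Qed.

Let I := fun s => RInt pf 0 s.

Lemma I_deriv s : is_derive I s (pf s).
Proof. apply RInt_deriv. apply pf_cont. Qed.

Lemma I0 : I 0 = 0.
Proof. unfold I. rewrite RInt_point. reflexivity. Qed.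

Lemma I_mono x y : x <= y -> I x <= I y.
Proof.
  intro Hxy. assert (H := nonincr (fun s => - I s) (fun s => - pf s) x y Hxy).
  cut (- I y <= - I x). lra. apply H.
  intros t _. apply is_derive_Reals. apply (is_derive_opp I). apply I_deriv.
  intros t _. pose proof (pf_nonneg t). lra.
Qed.

Let u := fun s => U0 * exp (- I s / 3).

Lemma upos s : 0 < u s.
Proof. unfold u. apply Rmult_lt_0_compat. apply U0pos. apply exp_pos. Qed.

Lemma u_le s : 0 <= s -> u s <= U0.
Proof.
  intro Hs. unfold u. pose proof (I_mono 0 s Hs). rewrite I0 in H. pose proof U0pos.
  assert (exp (- I s / 3) <= 1). { rewrite <- exp_0. apply exp_le. lra. }
  nra.
Qed.

Lemma u_deriv s : is_derive u s (u s * (- pf s / 3)).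
Proof.
  unfold u. auto_derive. exists (pf s). apply I_deriv.
  rewrite (Derive_eta I s (pf s)) by apply I_deriv. unfold Rdiv. ring.
Qed.

Lemma u_cont s : continuity_pt u s.
Proof. apply (deriv_cont u s (u s * (- pf s / 3))). apply is_derive_Reals. apply u_deriv. Qed.

Let kk := fun s => / (be * ext u s ^ 2).

Let c0 := / (be * U0 ^ 2).
Lemma c0pos : 0 < c0.
Proof. unfold c0. apply Rinv_0_lt_compat. apply Rmult_lt_0_compat. apply bepos. apply pow_lt, U0pos. Qed.

Lemma extu_pos s : 0 < ext u s. Proof. apply upos. Qed.

Lemma kk_ge s : c0 <= kk s.
Proof.
  unfold kk, c0. pose proof (extu_pos s). pose proof bepos. pose proof U0pos.
  assert (ext u s <= U0) by (unfold ext; apply u_le; apply Rmax_l).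
  apply Rinv_le_contravar. apply Rmult_lt_0_compat; auto. apply pow_lt; auto.
  apply Rmult_le_compat_l. lra. apply pow_incr. lra.
Qed.

Lemma kk_cont s : continuity_pt kk s.
Proof.
  assert (Hu : forall t, continuity_pt (ext u) t).
  { apply ext_cont. intros; apply u_cont. apply cont_rc, u_cont. }
  unfold kk. repeat contac2.
  apply Rgt_not_eq. apply Rmult_lt_0_compat. apply bepos. apply pow_lt, extu_pos.
Qed.

Let TT := fun s => RInt kk 0 s.

Lemma TT_deriv s : derivable_pt_lim TT s (kk s).
Proof. apply is_derive_Reals. apply RInt_deriv. apply kk_cont. Qed.

Lemma TT0 : TT 0 = 0.
Proof. unfold TT. rewrite RInt_point. reflexivity. Qed.

Let tau_sig := constructive_indefinite_description _ (inverse_fun TT kk c0 c0pos TT_deriv kk_ge TT0).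
Let tau := proj1_sig tau_sig.
Lemma tau_spec : (forall t, TT (tau t) = t) /\ (forall t, derivable_pt_lim tau t (/ kk (tau t))) /\
    (forall t, continuity_pt tau t) /\ tau 0 = 0 /\ (forall t, 0 < t -> 0 < tau t) /\
    (forall M, exists T0, forall t, T0 <= t -> M <= tau t).
Proof. exact (proj2_sig tau_sig). Qed.

Lemma tau_deriv t : 0 < t -> is_derive tau t (be * u (tau t) ^ 2).
Proof.
  intro Ht. destruct tau_spec as (_&Hd&_&_&Hp&_). apply is_derive_Reals.
  replace (be * u (tau t) ^2) with (/ kk (tau t)). apply Hd.
  unfold kk, ext. rewrite Rmax_right by (left; apply Hp; auto). rewrite Rinv_inv. reflexivity.
Qed.

Let G0 := fun t => u (tau t) ^ 3.
Let G1 := fun t => ab (tau t) / u (tau t).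
Let G2 := fun t => bb (tau t) / u (tau t).
Let G3 := fun t => cb (tau t) / u (tau t).

Lemma comp_d (F : R -> R) t dF : 0 < t -> is_derive F (tau t) dF ->
  derivable_pt_lim (fun t => F (tau t)) t (be * u (tau t)^2 * dF).
Proof.
  intros Ht HF. apply is_derive_Reals.
  exact (is_derive_comp F tau t dF _ HF (tau_deriv t Ht)).
Qed.

Lemma G0_d t : 0 < t -> derivable_pt_lim G0 t (- be * pp (G1 t) (G2 t) (G3 t) * (G0 t) ^ 3).
Proof.
  intro Ht. destruct tau_spec as (_&_&_&_&Hp&_). pose proof (Hp t Ht) as Hs.
  set (s := tau t) in *.
  assert (HF : is_derive (fun s => u s ^ 3) s (3 * u s ^ 2 * (u s * (- pf s / 3)))).
  { auto_derive. exists (u s * (- pf s / 3)). apply u_deriv.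
    rewrite (Derive_eta u s _ (u_deriv s)). ring. }
  pose proof (comp_d _ t _ Ht HF) as Hres. fold s in Hres.
  replace (- be * pp (G1 t) (G2 t) (G3 t) * (G0 t) ^ 3) with (be * u s ^ 2 * (3 * u s ^ 2 * (u s * (- pf s / 3)))).
  exact Hres.
  unfold G0, G1, G2, G3. fold s. unfold pf. pose proof (upos s). unfold pp. field. lra.
Qed.

Lemma alg1 Dv B C U : B <> 0 -> C <> 0 -> U <> 0 -> Dv <> 0 ->
  be * U^2 * ((- Dv * ((-(2/3) * rr B (Dv/(B*C)) C * B) * C + B * (-(2/3) * rr C (Dv/(B*C)) B * C)) / (B*C)^2) / U
     - Dv/(B*C) * (U * (- pp (Dv/(B*C)) B C / 3)) / U^2)
  = - be * qq (Dv/(B*C)/U) (B/U) (C/U) * (U^3)^2 * (Dv/(B*C)/U).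
Proof. intros. unfold rr, pp, qq. field. auto. Qed.

Lemma alg2 a B C U : B <> 0 -> C <> 0 -> U <> 0 -> a <> 0 ->
  be * U^2 * ((-(2/3) * rr B a C * B) / U - B * (U * (- pp a B C / 3)) / U^2)
  = - be * qq (B/U) (C/U) (a/U) * (U^3)^2 * (B/U).
Proof. intros. unfold rr, pp, qq. field. auto. Qed.

Lemma alg3 a B C U : B <> 0 -> C <> 0 -> U <> 0 -> a <> 0 ->
  be * U^2 * ((-(2/3) * rr C a B * C) / U - C * (U * (- pp a B C / 3)) / U^2)
  = - be * qq (C/U) (a/U) (B/U) * (U^3)^2 * (C/U).
Proof. intros. unfold rr, pp, qq. field. auto. Qed.

Lemma G1_d t : 0 < t -> derivable_pt_lim G1 t (- be * qq (G1 t) (G2 t) (G3 t) * (G0 t) ^ 2 * G1 t).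
Proof.
  intro Ht. destruct tau_spec as (_&_&_&_&Hp&_). pose proof (Hp t Ht) as Hs.
  set (s := tau t) in *.
  pose proof (bb_deriv s Hs) as Hb. pose proof (cb_deriv s Hs) as Hc. pose proof (u_deriv s) as Hu.
  pose proof (bbpos s). pose proof (cbpos s). pose proof (upos s). pose proof Dpos.
  assert (HF : is_derive (fun s => D / (bb s * cb s) / u s) s
     ((- D * ((-(2/3) * rr (bb s) (D/(bb s*cb s)) (cb s) * bb s) * cb s + bb s * (-(2/3) * rr (cb s) (D/(bb s*cb s)) (bb s) * cb s)) / (bb s*cb s)^2) / u s
     - D/(bb s*cb s) * (u s * (- pp (D/(bb s*cb s)) (bb s) (cb s) / 3)) / u s^2)).
  { auto_derive. repeat split; try (eexists; eassumption); try lra. apply Rgt_not_eq, Rmult_lt_0_compat; lra.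
    rewrite (Derive_eta bb s _ Hb), (Derive_eta cb s _ Hc), (Derive_eta u s _ Hu). unfold ab, pf, ab. field.
    repeat split; lra. }
  pose proof (comp_d _ t _ Ht HF) as Hres. fold s in Hres.
  rewrite alg1 in Hres by lra. exact Hres.
Qed.

Lemma G2_d t : 0 < t -> derivable_pt_lim G2 t (- be * qq (G2 t) (G3 t) (G1 t) * (G0 t) ^ 2 * G2 t).
Proof.
  intro Ht. destruct tau_spec as (_&_&_&_&Hp&_). pose proof (Hp t Ht) as Hs.
  set (s := tau t) in *.
  pose proof (bb_deriv s Hs) as Hb. pose proof (u_deriv s) as Hu.
  pose proof (bbpos s). pose proof (cbpos s). pose proof (upos s). pose proof (abpos s).
  assert (HF : is_derive (fun s => bb s / u s) s
     ((-(2/3) * rr (bb s) (ab s) (cb s) * bb s) / u s - bb s * (u s * (- pp (ab s) (bb s) (cb s) / 3)) / u s^2)).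
  { auto_derive. repeat split; try (eexists; eassumption); try lra.
    rewrite (Derive_eta bb s _ Hb), (Derive_eta u s _ Hu). unfold pf. field. lra. }
  pose proof (comp_d _ t _ Ht HF) as Hres. fold s in Hres.
  rewrite alg2 in Hres by lra. exact Hres.
Qed.

Lemma G3_d t : 0 < t -> derivable_pt_lim G3 t (- be * qq (G3 t) (G1 t) (G2 t) * (G0 t) ^ 2 * G3 t).
Proof.
  intro Ht. destruct tau_spec as (_&_&_&_&Hp&_). pose proof (Hp t Ht) as Hs.
  set (s := tau t) in *.
  pose proof (cb_deriv s Hs) as Hc. pose proof (u_deriv s) as Hu.
  pose proof (bbpos s). pose proof (cbpos s). pose proof (upos s). pose proof (abpos s).
  assert (HF : is_derive (fun s => cb s / u s) s
     ((-(2/3) * rr (cb s) (ab s) (bb s) * cb s) / u s - cb s * (u s * (- pp (ab s) (bb s) (cb s) / 3)) / u s^2)).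
  { auto_derive. repeat split; try (eexists; eassumption); try lra.
    rewrite (Derive_eta cb s _ Hc), (Derive_eta u s _ Hu). unfold pf. field. lra. }
  pose proof (comp_d _ t _ Ht HF) as Hres. fold s in Hres.
  rewrite alg3 in Hres by lra. exact Hres.
Qed.

Lemma G_sol : S3_global_solution h0 h1 h2 h3 G0 G1 G2 G3.
Proof.
  destruct tau_spec as (_&_&Hc&Ht0&_&_).
  destruct HP as (Hb0&Hc0&_).
  assert (Hu0 : u 0 = U0) by (unfold u; rewrite I0; replace (-0/3) with 0 by field; rewrite exp_0; ring).
  assert (Hbb0 : bb 0 = U0 * h2) by (unfold bb, ext; rewrite Rmax_left by lra; auto).
  assert (Hcb0 : cb 0 = U0 * h3) by (unfold cb, ext; rewrite Rmax_left by lra; auto).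
  pose proof U0pos. pose proof U0cube.
  assert (Hcu : forall t, continuity_pt (fun t => u (tau t)) t).
  { intro t. apply (continuity_pt_comp tau u). auto. apply u_cont. }
  assert (Hcb : forall t, continuity_pt (fun t => bb (tau t)) t).
  { intro t. apply (continuity_pt_comp tau bb). auto. apply bb_cont. }
  assert (Hcc : forall t, continuity_pt (fun t => cb (tau t)) t).
  { intro t. apply (continuity_pt_comp tau cb). auto. apply cb_cont. }
  assert (Hnz : forall t, u (tau t) <> 0) by (intro; apply Rgt_not_eq, upos).
  assert (Hnz2 : forall t, bb (tau t) * cb (tau t) <> 0) by (intro; apply Rgt_not_eq, Rmult_lt_0_compat; [apply bbpos|apply cbpos]).
  unfold S3_global_solution. fold be.
  repeat split.
  - unfold G0. rewrite Ht0, Hu0. auto.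
  - unfold G1, ab. rewrite Ht0, Hu0, Hbb0, Hcb0. unfold D, detH. rewrite <- H0. field. lra.
  - unfold G2. rewrite Ht0, Hu0, Hbb0. field. lra.
  - unfold G3. rewrite Ht0, Hu0, Hcb0. field. lra.
  - apply cont_rc. unfold G0. repeat contac2.
  - apply cont_rc. unfold G1, ab. repeat contac2; auto.
  - apply cont_rc. unfold G2. repeat contac2; auto.
  - apply cont_rc. unfold G3. repeat contac2; auto.
  - apply G0_d; auto.
  - apply G1_d; auto.
  - apply G2_d; auto.
  - apply G3_d; auto.
Qed.


Lemma conv_const (l : R) : conv_infty (fun _ => l) l.
Proof. intros eps Heps. exists 0. intros. rewrite Rminus_diag, Rabs_R0. auto. Qed.

Lemma bb_lim : conv_infty bb dd.
Proof. apply (conv_ext b). exists 1. intros t Ht. unfold bb. rewrite ext_pos; lra. auto. Qed.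
Lemma cb_lim : conv_infty cb dd.
Proof. apply (conv_ext c). exists 1. intros t Ht. unfold cb. rewrite ext_pos; lra. auto. Qed.

Lemma ab_lim : conv_infty ab dd.
Proof.
  pose proof ddpos. pose proof ddcube.
  assert (E : D/(dd*dd) = dd) by (rewrite <- H0; field; lra).
  pose proof (conv_div (fun _ => D) (fun s => bb s * cb s) D (dd*dd) ltac:(apply Rgt_not_eq, Rmult_lt_0_compat; lra)
    (conv_const D) (conv_mult _ _ _ _ bb_lim cb_lim)) as Hc.
  rewrite E in Hc. exact Hc.
Qed.

Lemma hom_pp a B C : a <> 0 -> pp a B C = a^4 * pp 1 (1 + (B/a - 1)) (1 + (C/a - 1)).
Proof. intro. unfold pp. field. auto. Qed.
Lemma hom_rr a B C : a <> 0 -> rr B a C = a^4 * rr (1 + (B/a - 1)) 1 (1 + (C/a - 1)).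
Proof. intro. unfold rr, pp, qq. field. auto. Qed.

Lemma Sch_deriv s : 0 < s -> is_derive (fun s => Sch (D / (bb s * cb s)) (bb s) (cb s)) s
   (-(2/9) * (rr (ab s) (bb s) (cb s) ^2 + rr (bb s) (ab s) (cb s) ^2 + rr (cb s) (ab s) (bb s) ^2)).
Proof.
  intro Hs. pose proof (bb_deriv s Hs) as Hb. pose proof (cb_deriv s Hs) as Hc.
  pose proof (bbpos s). pose proof (cbpos s). pose proof Dpos.
  unfold Sch. auto_derive. { repeat split; try (eexists; eassumption); apply Rgt_not_eq, Rmult_lt_0_compat; lra. }
  rewrite (Derive_eta bb s _ Hb), (Derive_eta cb s _ Hc). unfold ab. unfold rr, pp, qq. field. lra.
Qed.

Lemma I_bound : exists B, forall s, 0 <= s -> I s <= B.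
Proof.
  pose proof ddpos as Hdd.
  assert (Hv : conv_infty (fun s => bb s / ab s) 1).
  { replace 1 with (dd/dd) by (field; lra). apply conv_div. lra. apply bb_lim. apply ab_lim. }
  assert (Hw : conv_infty (fun s => cb s / ab s) 1).
  { replace 1 with (dd/dd) by (field; lra). apply conv_div. lra. apply cb_lim. apply ab_lim. }
  destruct (Hv (1/200) ltac:(lra)) as [T1 HT1].
  destruct (Hw (1/200) ltac:(lra)) as [T2 HT2].
  destruct (ab_lim (dd/2) ltac:(lra)) as [T3 HT3].
  set (s0 := Rmax 1 (Rmax T1 (Rmax T2 T3))).
  assert (s0 >= 1 /\ s0 >= T1 /\ s0 >= T2 /\ s0 >= T3) as (S1&S2&S3&S4).
  { unfold s0. pose proof (Rmax_l 1 (Rmax T1 (Rmax T2 T3))). pose proof (Rmax_r 1 (Rmax T1 (Rmax T2 T3))).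
    pose proof (Rmax_l T1 (Rmax T2 T3)). pose proof (Rmax_r T1 (Rmax T2 T3)).
    pose proof (Rmax_l T2 T3). pose proof (Rmax_r T2 T3). lra. }
  set (ka := 72 / dd^4).
  assert (Hka : 0 < ka) by (unfold ka; apply Rdiv_lt_0_compat; [lra| apply pow_lt; lra]).
  set (Psi := fun s => I s + ka * Sch (D / (bb s * cb s)) (bb s) (cb s)).
  assert (Hsch : forall s, 0 <= Sch (D / (bb s * cb s)) (bb s) (cb s)).
  { intro s. apply Sch_nonneg; left. apply abpos. apply bbpos. apply cbpos. }
  assert (Hdec : forall s, s0 <= s -> Psi s <= Psi s0).
  { intros s Hs.
    apply (nonincr Psi (fun s => pf s + ka * (-(2/9) * (rr (ab s) (bb s) (cb s) ^2 + rr (bb s) (ab s) (cb s) ^2 + rr (cb s) (ab s) (bb s) ^2)))).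
    auto.
    - intros t Ht. apply is_derive_Reals. unfold Psi.
      apply (is_derive_plus I (fun s => ka * Sch (D / (bb s * cb s)) (bb s) (cb s))). apply I_deriv.
      apply (is_derive_scal (fun s => Sch (D / (bb s * cb s)) (bb s) (cb s))). apply Sch_deriv. lra.
    - intros t Ht.
      pose proof (abpos t) as Ha. pose proof (bbpos t). pose proof (cbpos t).
      assert (A1 : Rabs (bb t / ab t - 1) <= 1/200) by (left; apply HT1; lra).
      assert (A2 : Rabs (cb t / ab t - 1) <= 1/200) by (left; apply HT2; lra).
      assert (A3 : dd/2 < ab t) by (assert (Rabs (ab t - dd) < dd/2) by (apply HT3; lra); apply Rabs_def2 in H1; lra).
      pose proof (local_ineq _ _ A1 A2) as L.
      set (a := ab t) in *. set (B := bb t) in *. set (C := cb t) in *.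
      assert (E1 : pf t = a^4 * pp 1 (1 + (B/a - 1)) (1 + (C/a - 1))) by (apply hom_pp; lra).
      assert (E2 : rr B a C = a^4 * rr (1 + (B/a - 1)) 1 (1 + (C/a - 1))) by (apply hom_rr; lra).
      assert (E3 : rr C a B = a^4 * rr (1 + (C/a - 1)) 1 (1 + (B/a - 1))) by (apply hom_rr; lra).
      set (P0 := pp 1 (1 + (B/a - 1)) (1 + (C/a - 1))) in *.
      set (R2 := rr (1 + (B/a - 1)) 1 (1 + (C/a - 1))) in *.
      set (R3 := rr (1 + (C/a - 1)) 1 (1 + (B/a - 1))) in *.
      assert (Ha4 : (dd/2)^4 <= a^4) by (apply pow_incr; lra).
      assert (Hdd4 : 0 < dd^4) by (apply pow_lt; lra).
      assert (key : pf t <= 16 / dd^4 * (rr B a C ^ 2 + rr C a B ^ 2)).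
      { rewrite E1, E2, E3.
        assert (HX : 0 <= R2^2 + R3^2) by (pose proof (pow2_ge_0 R2); pose proof (pow2_ge_0 R3); lra).
        assert (Ha4' : 0 <= a^4) by (apply pow_le; lra).
        assert (H16 : 1 <= 16 / dd^4 * a^4).
        { apply Rmult_le_reg_l with (dd^4). lra. field_simplify. 2: lra.
          replace ((dd/2)^4) with (dd^4/16) in Ha4 by field. lra. }
        replace (16 / dd ^ 4 * ((a ^ 4 * R2) ^ 2 + (a ^ 4 * R3) ^ 2)) with ((16 / dd^4 * a^4) * (a^4 * (R2^2 + R3^2))) by ring.
        apply Rle_trans with (a^4 * (R2^2+R3^2)).
        apply Rmult_le_compat_l; auto.
        replace (a^4 * (R2^2+R3^2)) with (1 * (a^4 * (R2^2+R3^2))) at 1 by ring.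
        apply Rmult_le_compat_r; auto. apply Rmult_le_pos; auto. }
      assert (Hr1 : 0 <= rr a B C ^ 2) by apply pow2_ge_0.
      assert (ka * (2/9) = 16 / dd^4) by (unfold ka; field; lra).
      nra. }
  exists (Psi s0). intros s Hs.
  destruct (Rle_dec s s0).
  - pose proof (I_mono s s0 r). pose proof (Hsch s0). unfold Psi. nra.
  - pose proof (Hdec s ltac:(lra)). pose proof (Hsch s). unfold Psi in *. nra.
Qed.

Lemma G_lim : (exists L, 0 < L /\ conv_infty G0 L) /\ (exists m, 0 < m /\ conv_infty G1 m /\ conv_infty G2 m /\ conv_infty G3 m).
Proof.
  destruct I_bound as [B HB].
  destruct (mono_lim I B (fun x y H => I_mono x y (proj2 H)) HB) as [IL [HIL _]].
  set (uL := U0 * exp (- IL / 3)).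
  assert (HuL : 0 < uL) by (unfold uL; apply Rmult_lt_0_compat; [apply U0pos|apply exp_pos]).
  assert (Hu : conv_infty u uL).
  { apply (conv_cont I IL (fun x => U0 * exp (- x / 3)) HIL).
    apply (deriv_cont _ IL (U0 * exp (- IL / 3) * (- 1 / 3))). apply is_derive_Reals. auto_derive. auto.
    unfold Rdiv. ring. }
  destruct tau_spec as (_&_&_&_&_&Hinf).
  assert (Hut : conv_infty (fun t => u (tau t)) uL) by (apply conv_comp_infty; auto).
  assert (Hat : conv_infty (fun t => ab (tau t)) dd) by (apply conv_comp_infty; auto; apply ab_lim).
  assert (Hbt : conv_infty (fun t => bb (tau t)) dd) by (apply conv_comp_infty; auto; apply bb_lim).
  assert (Hct : conv_infty (fun t => cb (tau t)) dd) by (apply conv_comp_infty; auto; apply cb_lim).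
  split.
  - exists (uL ^ 3). split. apply pow_lt; auto. apply conv_pow. auto.
  - exists (dd / uL). split. apply Rdiv_lt_0_compat; auto. apply ddpos.
    repeat split; apply conv_div; auto; lra.
Qed.

Lemma construct_all : exists g0 g1 g2 g3, S3_global_solution h0 h1 h2 h3 g0 g1 g2 g3 /\
  (exists L, 0 < L /\ conv_infty g0 L) /\ (exists m, 0 < m /\ conv_infty g1 m /\ conv_infty g2 m /\ conv_infty g3 m).
Proof. exists G0, G1, G2, G3. split. apply G_sol. apply G_lim. Qed.

End Construct.
Theorem theorem5p22 (h0 h1 h2 h3 : R) :
  0 < h0 -> 0 < h1 -> 0 < h2 -> 0 < h3 ->
  h1 <= h2 -> h2 <= h3 ->
  in_DL0 h0 h1 h2 h3 ->
  (exists g0 g1 g2 g3 : R -> R, S3_global_solution h0 h1 h2 h3 g0 g1 g2 g3) /\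
  (forall g0 g1 g2 g3 : R -> R, S3_global_solution h0 h1 h2 h3 g0 g1 g2 g3 ->
     (exists L, 0 < L /\ conv_infty g0 L) /\
     (exists m, 0 < m /\ conv_infty g1 m /\ conv_infty g2 m /\ conv_infty g3 m)).
Proof.
  intros Q0 Q1 Q2 Q3 _ _ [b [c [HP [Hb Hc]]]].
  destruct (construct_all h0 h1 h2 h3 Q0 Q1 Q2 Q3 b c HP Hb Hc) as (G0&G1&G2&G3&HG&[L [HL HL0]]&[m [Hm [Hm1 [Hm2 Hm3]]]]).
  split.
  - exists G0, G1, G2, G3. exact HG.
  - intros g0 g1 g2 g3 Hg.
    assert (E : forall t, 0 <= t -> g0 t = G0 t /\ g1 t = G1 t /\ g2 t = G2 t /\ g3 t = G3 t)
      by (intros t Ht; exact (uniq_all h0 h1 h2 h3 g0 g1 g2 g3 G0 G1 G2 G3 Hg HG t Ht)).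
    split.
    + exists L. split; auto. apply (conv_ext G0). exists 0. intros t Ht. symmetry. apply E; auto. auto.
    + exists m. split; auto. repeat split.
      * apply (conv_ext G1). exists 0. intros t Ht. symmetry. apply E; auto. auto.
      * apply (conv_ext G2). exists 0. intros t Ht. symmetry. apply E; auto. auto.
      * apply (conv_ext G3). exists 0. intros t Ht. symmetry. apply E; auto. auto.
Qed.
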